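(* Let $D$ be a countable solid digraph, fix an enumeration $v_1,v_2,\dots$ of $V(D)$, and let $X_n=\{v_1,\dots,v_n\}$. Then $|D|$ is homeomorphic to the inverse limit $\varprojlim(D/P_{X_n})_{n\in\mathbb{N}}$ of the spaces $D/P_{X_n}$ with the bonding maps $f_{P_{X_m}P_{X_n}}$ for $n\le m$.
   Context: Digraphs have no loops and no parallel edges. $\mathcal{X}(D)$: finite subsets of $V(D)$. $D$ is solid if $D-X$ has only finitely many strong components for every $X\in\mathcal{X}(D)$. For $X\in\mathcal{X}(D)$ of a solid digraph, $P_X$ is the partition of $V(D)$ whose classes are the singletons $\{x\}$, $x\in X$, and the vertex sets of the strong components of $D-X$. For a finite partition $P$ of $V(D)$, $D/P$ is the finite multi-digraph on $P$ where for distinct $p_1,p_2\in P$ there is one edge $(e,p_1,p_2)$ per edge $e$ of $D$ from $p_1$ to $p_2$ if there are finitely many such edges, and a single quotient edge $(p_1p_2,p_1,p_2)$ if infinitely many; it carries the 1-complex topology. If $P'$ refines $P$, the map $f_{P'P}\colon D/P'\to D/P$ sends $p'$ to the class $p\supseteq p'$, sends an edge $(e',p_1',p_2')$ whose endpoints lie in one class $p$ entirely to $p$, and otherwise, with $p_1'\subseteq p_1\ne p_2\supseteq p_2'$, maps it pointwise onto the quotient edge from $p_1$ to $p_2$ if it exists and else onto $(e',p_1,p_2)$. Ends and limit edges: rays are one-way infinite directed paths, tails are subrays; a ray is solid if for each $X\in\mathcal{X}(D)$ it has a tail in a strong component of $D-X$; solid rays are equivalent if for each $X$ they have tails in the same strong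 component; classes are ends, $\Omega(D)$. $C(X,\omega)$: strong component of $D-X$ containing tails of rays of $\omega$ ($\omega$ lives in it); $X$ separates ends $\omega,\eta$ if $C(X,\omega)\ne C(X,\eta)$. For distinct ends, $(\omega,\eta)$ is a limit edge if for each $X$ separating them $D$ has an edge from $C(X,\omega)$ to $C(X,\eta)$; for a vertex $v$, $(v,\omega)$ (resp. $(\omega,v)$) is a limit edge if $D$ has an edge from $v$ to $C(X,\omega)$ (resp. from $C(X,\omega)$ to $v$) for all $X$ with $v\notin C(X,\omega)$. $\Lambda(D)$: limit edges. $|D|$: from $V(D)\cup\Omega(D)$ and copies $[0,1]_e$, $e\in E(D)\cup\Lambda(D)$, identify the tail of $e$ with $0$ and head with $1$; points on different edges correspond if they come from the same real. A limit edge lives in a strong component $C$ of $D-X$ if each endpoint is a vertex of or an end living in $C$. Topology generated by: (1) open $\varepsilon$-stars around vertices; (2) open subintervals of interiors of edges of $D$; (3) for an end $\omega$ and $X\in\mathcal{X}(D)$, $\hat C_\varepsilon(X,\omega)$: vertices and inner points of edges of $C(X,\omega)$, ends living in $C(X,\omega)$, points of limit edges living in $C(X,\omega)$, and for each edge of $E(D)\cup\Lambda(D)$ with exactly one endpoint $y$ a vertex of/end living in $C(X,\omega)$, the half-open segment of length $\varepsilon$ at $y$; (4) for an inner point $z$ of a limit edge $(\omega,\eta)$ and $X$ separating $\omega,\eta$: union of open $\varepsilon$-intervals around points corresponding to $z$ on all edges of $D$ from $C(X,\omega)$ to $C(X,\eta)$ and on limit edges with tail a vertex of/end living in $C(X,\omega)$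 and head a vertex of/end living in $C(X,\eta)$; for $(v,\omega)$ with $v\in X$ analogously over edges of $D$ from $v$ to $C(X,\omega)$ and limit edges $(v,\omega')$, $\omega'$ living in $C(X,\omega)$; symmetrically for $(\omega,v)$. *)

(* Defs.v *)
From Stdlib Require Import Reals List Classical ClassicalEpsilon.
Open Scope R_scope.

Definition topology (T : Type) := (T -> Prop) -> Prop.

Inductive generated {T : Type} (B : (T -> Prop) -> Prop) : (T -> Prop) -> Prop :=
| gen_base  : forall S, B S -> generated B S
| gen_full  : generated B (fun _ => True)
| gen_inter : forall U W, generated B U -> generated B W ->
                generated B (fun x => U x /\ W x)
| gen_union : forall (I : Type) (F : I -> T -> Prop),
                (forall i, generated B (F i)) ->
                generated B (fun x => exists i, F i x).

Definition continuous {A B : Type} (OA : topology A) (OB : topology B)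
  (f : A -> B) : Prop :=
  forall U, OB U -> OA (fun x => U (f x)).

Definition homeomorphic {A B : Type} (OA : topology A) (OB : topology B) : Prop :=
  exists (f : A -> B) (g : B -> A),
    (forall x, g (f x) = x) /\ (forall y, f (g y) = y) /\
    continuous OA OB f /\ continuous OB OA g.

Definition decide (P : Prop) : {P} + {~ P} := excluded_middle_informative P.

Section Digraph.
(* A digraph without loops and without parallel edges: vertex type V and
   edge relation E (an edge is determined by its tail and head). *)
Variable V : Type.
Variable E : V -> V -> Prop.

(* Finite vertex sets X in 𝒳(D) are represented by lists. *)

Inductive reach (X : list V) (u : V) : V -> Prop :=
| reach_refl : ~ In u X -> reach X u u
| reach_step : forall w z, reach X u w -> E w z -> ~ In z X -> reach X u z.

Definition sc (X : list V) (u w : V) : Prop := reach X u w /\ reach X w u.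

(* D is solid: D - X has finitely many strong components for each finite X. *)
Definition solid : Prop :=
  forall X : list V, exists reps : list V,
    forall y, ~ In y X -> exists u, In u reps /\ sc X u y.

Definition is_ray (r : nat -> V) : Prop :=
  (forall i j, r i = r j -> i = j) /\ (forall i, E (r i) (r (S i))).

Definition solid_ray (r : nat -> V) : Prop :=
  is_ray r /\
  forall X : list V, exists N, forall i j, (N <= i)%nat -> (N <= j)%nat -> sc X (r i) (r j).

Definition equiv_rays (r r' : nat -> V) : Prop :=
  forall X : list V, exists N, forall i j, (N <= i)%nat -> (N <= j)%nat -> sc X (r i) (r' j).

Definition is_end (w : (nat -> V) -> Prop) : Prop :=
  exists r, solid_ray r /\ forall r', w r' <-> (solid_ray r' /\ equiv_rays r r').

Definition C_of (X : list V) (w : (nat -> V) -> Prop) : V -> Prop :=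
  fun y => ~ In y X /\
    exists r, w r /\ exists N, forall i, (N <= i)%nat -> sc X y (r i).

Definition separates (X : list V) (w h : (nat -> V) -> Prop) : Prop :=
  ~ (forall y, C_of X w y <-> C_of X h y).

Inductive node := NV (v : V) | NE (w : (nat -> V) -> Prop).

Definition node_in (X : list V) (C : V -> Prop) (a : node) : Prop :=
  match a with
  | NV v => C v
  | NE h => is_end h /\ forall y, C_of X h y <-> C y
  end.

Definition limit_edge (a b : node) : Prop :=
  match a, b with
  | NE w, NE h => is_end w /\ is_end h /\ w <> h /\
      forall X : list V, separates X w h ->
        exists u z, C_of X w u /\ C_of X h z /\ E u z
  | NV v, NE w => is_end w /\
      forall X : list V, ~ C_of X w v -> exists z, C_of X w z /\ E v z
  | NE w, NV v => is_end w /\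
      forall X : list V, ~ C_of X w v -> exists z, C_of X w z /\ E z v
  | NV _, NV _ => False
  end.

(* Edges of E(D) ∪ Λ(D), identified by (tail, head). *)
Definition is_edge (a b : node) : Prop :=
  match a, b with
  | NV u, NV w => E u w
  | _, _ => limit_edge a b
  end.

(* DInner a b t is the point of [0,1]_e, e = (a,b), at 0 < t < 1;
   t = 0 and t = 1 are identified with the tail a and the head b. *)
Inductive DPt := DV (v : V) | DEnd (w : (nat -> V) -> Prop) | DInner (a b : node) (t : R).

Definition in_D (p : DPt) : Prop :=
  match p with
  | DV _ => True
  | DEnd w => is_end w
  | DInner a b t => is_edge a b /\ 0 < t < 1
  end.

Definition Dspace := { p : DPt | in_D p }.

Definition star_set (v : V) (eps : R) : DPt -> Prop :=
  fun p => p = DV v \/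
    exists a b t, p = DInner a b t /\
      ((a = NV v /\ t < eps) \/ (b = NV v /\ 1 - eps < t)).

Definition interval_set (u w : V) (lo hi : R) : DPt -> Prop :=
  fun p => exists t, p = DInner (NV u) (NV w) t /\ lo < t < hi.

Definition Chat_set (X : list V) (w : (nat -> V) -> Prop) (eps : R) : DPt -> Prop :=
  fun p =>
    let C := C_of X w in
    match p with
    | DV y => C y
    | DEnd h => node_in X C (NE h)
    | DInner a b t =>
        (node_in X C a /\ node_in X C b) \/
        (node_in X C a /\ ~ node_in X C b /\ t < eps) \/
        (~ node_in X C a /\ node_in X C b /\ 1 - eps < t)
    end.

(* (4) neighbourhoods of inner points of limit edges: the union of the open
   ε-intervals around t0 on all edges of E(D) ∪ Λ(D) whose tail is a node
   satisfying Ptail and whose head is a node satisfying Phead. *)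
Definition bundle_set (Ptail Phead : node -> Prop) (t0 eps : R) : DPt -> Prop :=
  fun p => exists a b t, p = DInner a b t /\ Ptail a /\ Phead b /\
    0 < t < 1 /\ Rabs (t - t0) < eps.

Definition D_basic (S : DPt -> Prop) : Prop :=
  (exists v eps, 0 < eps /\ S = star_set v eps) \/
  (exists u w lo hi, E u w /\ 0 <= lo /\ lo < hi /\ hi <= 1 /\
       S = interval_set u w lo hi) \/
  (exists X w eps, is_end w /\ 0 < eps /\ S = Chat_set X w eps) \/
  (exists w h X t0 eps, limit_edge (NE w) (NE h) /\ separates X w h /\
       0 < t0 < 1 /\ 0 < eps /\
       S = bundle_set (node_in X (C_of X w)) (node_in X (C_of X h)) t0 eps) \/
  (exists v w X t0 eps, limit_edge (NV v) (NE w) /\ In v X /\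
       0 < t0 < 1 /\ 0 < eps /\
       S = bundle_set (fun a => a = NV v) (node_in X (C_of X w)) t0 eps) \/
  (exists w v X t0 eps, limit_edge (NE w) (NV v) /\ In v X /\
       0 < t0 < 1 /\ 0 < eps /\
       S = bundle_set (node_in X (C_of X w)) (fun b => b = NV v) t0 eps).

Definition D_open : topology Dspace :=
  generated (fun U : Dspace -> Prop =>
    exists S, D_basic S /\ U = (fun p => S (proj1_sig p))).

Definition cls (X : list V) (u : V) : V -> Prop :=
  fun y => (In u X /\ y = u) \/ (~ In u X /\ sc X u y).

Definition is_class (X : list V) (p : V -> Prop) : Prop := exists u, p = cls X u.

Definition fin_edges (p1 p2 : V -> Prop) : Prop :=
  exists l : list (V * V), forall u w, p1 u -> p2 w -> E u w -> In (u, w) l.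

(* Edges of D/P: QED u w is the edge (e, p1, p2) for e = (u,w) an edge of D,
   QEQ p1 p2 is the quotient edge (p1p2, p1, p2). *)
Inductive QEdge := QED (u w : V) | QEQ (p1 p2 : V -> Prop).

Definition qtail (X : list V) (e : QEdge) : V -> Prop :=
  match e with QED u _ => cls X u | QEQ p1 _ => p1 end.
Definition qhead (X : list V) (e : QEdge) : V -> Prop :=
  match e with QED _ w => cls X w | QEQ _ p2 => p2 end.

Definition is_qedge (X : list V) (e : QEdge) : Prop :=
  match e with
  | QED u w => E u w /\ cls X u <> cls X w /\ fin_edges (cls X u) (cls X w)
  | QEQ p1 p2 => is_class X p1 /\ is_class X p2 /\ p1 <> p2 /\ ~ fin_edges p1 p2
  end.

Inductive QPt := QVert (p : V -> Prop) | QInner (e : QEdge) (t : R).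

Definition in_quot (X : list V) (q : QPt) : Prop :=
  match q with
  | QVert p => is_class X p
  | QInner e t => is_qedge X e /\ 0 < t < 1
  end.

Definition qspace (X : list V) := { q : QPt | in_quot X q }.

Definition qpt (X : list V) (e : QEdge) (t : R) : QPt :=
  if Req_EM_T t 0 then QVert (qtail X e)
  else if Req_EM_T t 1 then QVert (qhead X e)
  else QInner e t.

Definition quot_open (X : list V) : topology (qspace X) :=
  fun U =>
    let U' := fun q => exists h : in_quot X q, U (exist _ q h) in
    forall e, is_qedge X e -> forall t, 0 <= t <= 1 -> U' (qpt X e t) ->
      exists d, 0 < d /\ forall s, 0 <= s <= 1 -> Rabs (s - t) < d -> U' (qpt X e s).

(* The bonding map f_{P_{X'} P_X} : D/P_{X'} -> D/P_X (X ⊆ X'),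
   written on the raw point type. *)
Definition coarse (X : list V) (p' : V -> Prop) : V -> Prop :=
  fun y => exists u, p' u /\ cls X u y.

Definition fbond (X X' : list V) (q : QPt) : QPt :=
  match q with
  | QVert p' => QVert (coarse X p')
  | QInner e t =>
      let p1 := coarse X (qtail X' e) in
      let p2 := coarse X (qhead X' e) in
      if decide (p1 = p2) then QVert p1
      else if decide (~ fin_edges p1 p2) then QInner (QEQ p1 p2) t
      else QInner e t
  end.

Variable enum : nat -> V.

(* X_n = {v_1, ..., v_n} = {enum 0, ..., enum (n-1)} *)
Definition Xn (n : nat) : list V := map enum (seq 0 n).

Definition limspace :=
  { s : forall n, qspace (Xn n) |
      forall n m, (n <= m)%nat -> fbond (Xn n) (Xn m) (proj1_sig (s m)) = proj1_sig (s n) }.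

(* subspace of the product topology *)
Definition lim_open : topology limspace :=
  generated (fun W : limspace -> Prop =>
    exists n (U : qspace (Xn n) -> Prop), quot_open (Xn n) U /\
      W = (fun s => U (proj1_sig s n))).

End Digraph.

Arguments DV {V}. Arguments DEnd {V}. Arguments DInner {V}.

(* Main.v *)
Require Import Defs.
From Stdlib Require Import Reals List Classical ClassicalEpsilon Lia Lra.
From Stdlib Require Import FunctionalExtensionality PropExtensionality ProofIrrelevance.

Arguments NV {V}. Arguments NE {V}. Arguments QED {V}. Arguments QEQ {V}.
Arguments QVert {V}. Arguments QInner {V}.

Lemma pred_ext {A : Type} (p q : A -> Prop) : (forall x, p x <-> q x) -> p = q.
Proof. intro H; apply functional_extensionality; intro x; apply propositional_extensionality; auto. Qed.

Section Main.
Variable V : Type.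
Variable E : V -> V -> Prop.
Variable enum : nat -> V.
Hypothesis Hirr : forall v, ~ E v v.
Hypothesis Hsol : solid V E.
Hypothesis Henum : forall v, exists n, enum n = v.

Local Notation reach := (Defs.reach V E).
Local Notation sc := (Defs.sc V E).
Local Notation cls := (Defs.cls V E).
Local Notation is_class := (Defs.is_class V E).
Local Notation C_of := (Defs.C_of V E).
Local Notation is_end := (Defs.is_end V E).
Local Notation solid_ray := (Defs.solid_ray V E).
Local Notation equiv_rays := (Defs.equiv_rays V E).
Local Notation separates := (Defs.separates V E).
Local Notation node_in := (Defs.node_in V E).
Local Notation limit_edge := (Defs.limit_edge V E).
Local Notation is_edge := (Defs.is_edge V E).
Local Notation fin_edges := (Defs.fin_edges V E).
Local Notation coarse := (Defs.coarse V E).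
Local Notation Xn := (Defs.Xn V enum).

Lemma reach_notin_l X u z : reach X u z -> ~ In u X.
Proof. induction 1; auto. Qed.
Lemma reach_notin_r X u z : reach X u z -> ~ In z X.
Proof. induction 1; auto. Qed.
Lemma reach_trans X u w z : reach X u w -> reach X w z -> reach X u z.
Proof. intros H1 H2; induction H2; auto. eapply reach_step; eauto. Qed.
Lemma reach_mono X X' u z : incl X X' -> reach X' u z -> reach X u z.
Proof. intros Hi H; induction H. - apply reach_refl; auto. - eapply reach_step; eauto. Qed.

Lemma sc_sym X u w : sc X u w -> sc X w u. Proof. unfold Defs.sc; tauto. Qed.
Lemma sc_trans X u w z : sc X u w -> sc X w z -> sc X u z.
Proof. intros [] []; split; eapply reach_trans; eauto. Qed.
Lemma sc_refl X u : ~ In u X -> sc X u u. Proof. split; apply reach_refl; auto. Qed.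
Lemma sc_mono X X' u z : incl X X' -> sc X' u z -> sc X u z.
Proof. intros Hi []; split; eapply reach_mono; eauto. Qed.
Lemma sc_notin X u z : sc X u z -> ~ In u X /\ ~ In z X.
Proof. intros [H _]; split; [eapply reach_notin_l|eapply reach_notin_r]; eauto. Qed.

Lemma cls_self X u : cls X u u.
Proof. unfold Defs.cls. destruct (classic (In u X)); [left; auto | right; split; auto; apply sc_refl; auto]. Qed.

Lemma cls_eq X u y : cls X u y -> cls X y = cls X u.
Proof.
  intros [[Hu ->]|[Hu Hs]]; auto.
  apply pred_ext; intro z; unfold Defs.cls.
  destruct (sc_notin _ _ _ Hs) as [_ Hy].
  split; intros [[A B]|[A B]]; try contradiction.
  - right; split; auto; eapply sc_trans; eauto.
  - right; split; auto; eapply sc_trans; eauto using sc_sym.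
Qed.

Lemma class_meet X p q y : is_class X p -> is_class X q -> p y -> q y -> p = q.
Proof.
  intros [u ->] [w ->] H1 H2. rewrite <- (cls_eq _ _ _ H1). apply cls_eq; auto.
Qed.

Lemma class_self X p y : is_class X p -> p y -> p = cls X y.
Proof. intros Hp H. eapply class_meet; eauto. exists y; auto. apply cls_self. Qed.

Lemma cls_mono X X' u y : incl X X' -> cls X' u y -> cls X u y.
Proof.
  intros Hi [[Hu ->]|[Hu Hs]]. apply cls_self.
  right; split. intro; apply Hu; auto. eapply sc_mono; eauto.
Qed.

Lemma cls_in X u y : In u X -> cls X u y -> y = u.
Proof. intros H [[_ ?]|[? _]]; auto; contradiction. Qed.

Lemma cls_notin X u y : ~ In u X -> cls X u y -> ~ In y X.
Proof. intros H [[? _]|[_ Hs]]. contradiction. apply (sc_notin _ _ _ Hs). Qed.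

Lemma coarse_eq X (p c : V -> Prop) : is_class X c -> (exists y, p y) -> (forall y, p y -> c y) -> coarse X p = c.
Proof.
  intros Hc [y0 Hy0] Hsub. apply pred_ext; intro z; unfold Defs.coarse; split.
  - intros [u [Hu Hz]]. rewrite (class_self _ _ _ Hc (Hsub _ Hu)). auto.
  - intro Hz. exists y0; split; auto. rewrite <- (class_self _ _ _ Hc (Hsub _ Hy0)). auto.
Qed.


Lemma equiv_refl r : solid_ray r -> equiv_rays r r.
Proof. intros [_ H]; exact H. Qed.
Lemma equiv_sym r r' : equiv_rays r r' -> equiv_rays r' r.
Proof. intros H X; destruct (H X) as [N HN]; exists N; intros; apply sc_sym; auto. Qed.
Lemma equiv_trans r1 r2 r3 : equiv_rays r1 r2 -> equiv_rays r2 r3 -> equiv_rays r1 r3.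
Proof.
  intros H1 H2 X; destruct (H1 X) as [N1 HN1]; destruct (H2 X) as [N2 HN2].
  exists (max N1 N2); intros i j Hi Hj.
  apply sc_trans with (r2 (max N1 N2)); [apply HN1|apply HN2]; lia.
Qed.

Lemma C_of_notin X w y : C_of X w y -> ~ In y X.
Proof. intros [H _]; auto. Qed.

Lemma C_of_class X w : is_end w -> exists u, ~ In u X /\ C_of X w = cls X u.
Proof.
  intros [r [Hr Hw]]. pose proof Hr as [Hray Hs]. destruct (Hs X) as [N HN].
  assert (HnN : ~ In (r N) X) by (apply (sc_notin _ _ _ (HN N N (le_n _) (le_n _)))).
  exists (r N); split; auto.
  apply pred_ext; intro y; unfold Defs.C_of, Defs.cls; split.
  - intros [Hy [r' [Hr' [N' HN']]]]. right; split; auto.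
    apply Hw in Hr' as [_ Heq]. destruct (Heq X) as [M HM].
    apply sc_trans with (r (max N M)). apply HN; lia.
    apply sc_trans with (r' (max M N')). apply HM; lia.
    apply sc_sym, HN'; lia.
  - intros [[A _]|[_ Hs']]. contradiction.
    split. apply (sc_notin _ _ _ Hs').
    exists r; split. apply Hw; split; auto; apply equiv_refl; auto.
    exists N; intros i Hi. apply sc_trans with (r N). apply sc_sym; auto. apply HN; lia.
Qed.

Lemma C_of_mono X X' w y : incl X X' -> C_of X' w y -> C_of X w y.
Proof.
  intros Hi [Hy [r [Hr [N HN]]]]; split. intro; apply Hy; auto.
  exists r; split; auto; exists N; intros; eapply sc_mono; eauto.
Qed.

Lemma end_eq w h : is_end w -> is_end h -> (forall X y, C_of X w y <-> C_of X h y) -> w = h.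
Proof.
  intros Hwe Hhe Hc. pose proof Hwe as [r0 [Hr0 Hw]]. pose proof Hhe as [r1 [Hr1 Hh]].
  assert (Heq : equiv_rays r0 r1).
  { intro X. pose proof Hr0 as [_ Hs0]. destruct (Hs0 X) as [N0 HN0].
    assert (HC : C_of X w (r0 N0)).
    { split. apply (sc_notin _ _ _ (HN0 N0 N0 (le_n _) (le_n _))).
      exists r0; split. apply Hw; split; auto; apply equiv_refl; auto.
      exists N0; intros; apply HN0; lia. }
    apply Hc in HC as [_ [r' [Hr' [N' HN']]]].
    apply Hh in Hr' as [_ Hq]. destruct (Hq X) as [M HM].
    exists (max N0 (max N' M)); intros i j Hi Hj.
    apply sc_trans with (r0 N0). apply HN0; lia.
    apply sc_trans with (r' (max N0 (max N' M))). apply HN'; lia.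
    apply sc_sym, HM; lia. }
  apply pred_ext; intro r'; rewrite Hw, Hh; split; intros [A B]; split; auto.
  - eapply equiv_trans; eauto using equiv_sym.
  - eapply equiv_trans; eauto.
Qed.

Lemma end_sep w h : is_end w -> is_end h -> w <> h -> exists X, separates X w h.
Proof.
  intros Hw Hh Hne. apply NNPP; intro Hn. apply Hne, end_eq; auto.
  intros X. pose proof (not_ex_all_not _ _ Hn X) as H. unfold Defs.separates in H.
  apply NNPP in H; auto.
Qed.

Definition node_ok (a : node V) : Prop := match a with NV _ => True | NE w => is_end w end.
Definition ncls (X : list V) (a : node V) : V -> Prop :=
  match a with NV v => cls X v | NE w => C_of X w end.

Lemma ncls_class X a : node_ok a -> is_class X (ncls X a).
Proof.
  destruct a as [v|w]; simpl; intro H. exists v; auto.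
  destruct (C_of_class X w H) as [u [_ Hu]]. exists u; auto.
Qed.

Lemma ncls_ne X a : node_ok a -> exists y, ncls X a y.
Proof. intro H; destruct (ncls_class X a H) as [u Hu]; exists u; rewrite Hu; apply cls_self. Qed.

Lemma ncls_mono X X' a y : incl X X' -> ncls X' a y -> ncls X a y.
Proof. destruct a; simpl; intros; [eapply cls_mono|eapply C_of_mono]; eauto. Qed.

Lemma ncls_coarse X X' a : incl X X' -> node_ok a -> coarse X (ncls X' a) = ncls X a.
Proof.
  intros Hi Ha. apply coarse_eq. apply ncls_class; auto. apply ncls_ne; auto.
  intros; eapply ncls_mono; eauto.
Qed.

Lemma ncls_sep_mono X X' a b : incl X X' -> node_ok a -> node_ok b ->
  ncls X a <> ncls X b -> ncls X' a <> ncls X' b.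
Proof.
  intros Hi Ha Hb Hne Heq. destruct (ncls_ne X' a Ha) as [y Hy].
  apply Hne. apply class_meet with (X := X) (y := y); auto using ncls_class.
  eapply ncls_mono; eauto. rewrite Heq in Hy; eapply ncls_mono; eauto.
Qed.

Lemma ncls_sub_iff X X' a C : incl X X' -> node_ok a -> is_class X C ->
  (ncls X a = C <-> forall y, ncls X' a y -> C y).
Proof.
  intros Hi Ha HC; split.
  - intros <- y; apply ncls_mono; auto.
  - intro H. destruct (ncls_ne X' a Ha) as [y Hy].
    apply class_meet with (X := X) (y := y); auto using ncls_class. eapply ncls_mono; eauto.
Qed.

Lemma node_in_iff X C a : node_ok a -> is_class X C -> (node_in X C a <-> ncls X a = C).
Proof.
  intros Ha HC; destruct a as [v|h]; simpl.
  - split. intro H; symmetry; apply class_self; auto. intros <-; apply cls_self.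
  - split. intros [_ H]; apply pred_ext; auto. intros <-; split; [exact Ha|tauto].
Qed.

Lemma dist_nodes_sep a b : node_ok a -> node_ok b -> a <> b -> exists X, ncls X a <> ncls X b.
Proof.
  intros Ha Hb Hne; destruct a as [u|w]; destruct b as [v|h]; simpl in *.
  - exists (u :: nil); simpl; intro Heq.
    assert (H := cls_self (u :: nil) v). rewrite <- Heq in H.
    apply cls_in in H; [|left; auto]. subst; auto.
  - exists (u :: nil); simpl; intro Heq.
    assert (H := cls_self (u :: nil) u). rewrite Heq in H. apply C_of_notin in H. apply H; left; auto.
  - exists (v :: nil); simpl; intro Heq.
    assert (H := cls_self (v :: nil) v). rewrite <- Heq in H. apply C_of_notin in H. apply H; left; auto.
  - assert (w <> h) by (intro; subst; auto).
    destruct (end_sep w h Ha Hb H) as [X HX]. exists X; intro Heq.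
    apply HX; intro; rewrite Heq; tauto.
Qed.

Lemma edge_ok a b : is_edge a b -> node_ok a /\ node_ok b /\ a <> b.
Proof.
  destruct a as [u|w]; destruct b as [v|h]; simpl.
  - intro H; repeat split; auto. intro Heq; injection Heq; intros ->; apply (Hirr _ H).
  - intros [H _]; repeat split; auto; discriminate.
  - intros [H _]; repeat split; auto; discriminate.
  - intros [H1 [H2 [H3 _]]]; repeat split; auto. intro Heq; injection Heq; auto.
Qed.

Lemma Xn_mono n m : (n <= m)%nat -> incl (Xn n) (Xn m).
Proof.
  intros Hnm x Hx. unfold Defs.Xn in *. apply in_map_iff in Hx as [i [<- Hi]].
  apply in_map; apply in_seq in Hi; apply in_seq; lia.
Qed.

Lemma Xn_cover (X : list V) : exists n, incl X (Xn n).
Proof.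
  induction X as [|x X IH]. exists 0%nat; intros y [].
  destruct IH as [n Hn]. destruct (Henum x) as [i <-].
  exists (max n (S i)). intros y [<-|Hy].
  - unfold Defs.Xn; apply in_map, in_seq; lia.
  - apply (Xn_mono n); [lia|auto].
Qed.

Lemma Xn_cover_ge (X : list V) N : exists n, (N <= n)%nat /\ incl X (Xn n).
Proof.
  destruct (Xn_cover X) as [n Hn]. exists (max n N); split. lia.
  intros y Hy; apply (Xn_mono n); [lia|auto].
Qed.


Local Notation qtail := (Defs.qtail V E).
Local Notation qhead := (Defs.qhead V E).
Local Notation is_qedge := (Defs.is_qedge V E).
Local Notation in_quot := (Defs.in_quot V E).
Local Notation fbond := (Defs.fbond V E).
Local Notation in_D := (Defs.in_D V E).

Definition qed_of (X : list V) (a b : node V) : QEdge V :=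
  match a, b with NV u, NV w => QED u w | _, _ => QEQ (ncls X a) (ncls X b) end.

Definition Fraw (X : list V) (p : DPt V) : QPt V :=
  match p with
  | DV v => QVert (cls X v)
  | DEnd w => QVert (C_of X w)
  | DInner a b t =>
      if decide (ncls X a = ncls X b) then QVert (ncls X a)
      else if decide (~ fin_edges (ncls X a) (ncls X b)) then QInner (QEQ (ncls X a) (ncls X b)) t
      else QInner (qed_of X a b) t
  end.

Lemma fin_mono (p q p' q' : V -> Prop) : (forall y, p' y -> p y) -> (forall y, q' y -> q y) ->
  fin_edges p q -> fin_edges p' q'.
Proof. intros H1 H2 [l Hl]; exists l; intros; apply Hl; auto. Qed.

Lemma limit_inf X a b : is_edge a b -> ~ (exists u w, a = NV u /\ b = NV w) ->
  ncls X a <> ncls X b -> ~ fin_edges (ncls X a) (ncls X b).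
Proof.
  intros He Hnv Hne [l Hl].
  set (X' := X ++ map fst l ++ map snd l).
  assert (Hi : incl X X') by (intros y Hy; apply in_or_app; auto).
  assert (Hl1 : forall u z, In (u, z) l -> In u X').
  { intros u z H; apply in_or_app; right; apply in_or_app; left; apply (in_map fst) in H; auto. }
  assert (Hl2 : forall u z, In (u, z) l -> In z X').
  { intros u z H; apply in_or_app; right; apply in_or_app; right; apply (in_map snd) in H; auto. }
  destruct (edge_ok _ _ He) as [Ha [Hb _]].
  destruct a as [v|w]; destruct b as [v'|h]; simpl in *.
  - apply Hnv; eauto.
  - destruct He as [_ Hw].
    assert (Hn : ~ C_of X' h v).
    { intro Hc. apply Hne. apply class_meet with (X := X) (y := v).
      exists v; auto. apply (ncls_class X (NE h) Hb). apply cls_self. eapply C_of_mono; eauto. }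
    destruct (Hw X' Hn) as [z [Hz Hvz]].
    apply (C_of_notin _ _ _ Hz). eapply Hl2, Hl; eauto. apply cls_self. eapply C_of_mono; eauto.
  - destruct He as [_ Hw].
    assert (Hn : ~ C_of X' w v').
    { intro Hc. apply Hne. apply class_meet with (X := X) (y := v').
      apply (ncls_class X (NE w) Ha). exists v'; auto. eapply C_of_mono; eauto. apply cls_self. }
    destruct (Hw X' Hn) as [z [Hz Hvz]].
    apply (C_of_notin _ _ _ Hz). eapply Hl1, Hl; eauto. eapply C_of_mono; eauto. apply cls_self.
  - destruct He as [_ [_ [_ Hs]]].
    assert (Hsep : separates X' w h).
    { intro Hall. destruct (ncls_ne X' (NE w) Ha) as [u0 Hu0]; simpl in Hu0.
      apply Hne. apply class_meet with (X := X) (y := u0).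
      apply (ncls_class X (NE w) Ha). apply (ncls_class X (NE h) Hb).
      eapply C_of_mono; eauto. eapply C_of_mono; eauto. apply Hall; auto. }
    destruct (Hs X' Hsep) as [u [z [Hu [Hz Huz]]]].
    apply (C_of_notin _ _ _ Hu). eapply Hl1, Hl; eauto; eapply C_of_mono; eauto.
Qed.

Lemma Fraw_same X a b t : ncls X a = ncls X b -> Fraw X (DInner a b t) = QVert (ncls X a).
Proof. intro H; simpl; destruct (decide _); [auto|contradiction]. Qed.

Lemma Fraw_QEQ X a b t : ncls X a <> ncls X b -> ~ fin_edges (ncls X a) (ncls X b) ->
  Fraw X (DInner a b t) = QInner (QEQ (ncls X a) (ncls X b)) t.
Proof. intros H1 H2; simpl; destruct (decide _); [contradiction|]. destruct (decide _); [auto|contradiction]. Qed.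

Lemma Fraw_QED X u w t : cls X u <> cls X w -> fin_edges (cls X u) (cls X w) ->
  Fraw X (DInner (NV u) (NV w) t) = QInner (QED u w) t.
Proof. intros H1 H2; simpl; destruct (decide _); [contradiction|]. destruct (decide _); [contradiction|auto]. Qed.

Lemma Fraw_diff X a b t : is_edge a b -> ncls X a <> ncls X b ->
  exists e, Fraw X (DInner a b t) = QInner e t /\ qtail X e = ncls X a /\ qhead X e = ncls X b
    /\ is_qedge X e.
Proof.
  intros He Hne. destruct (edge_ok _ _ He) as [Ha [Hb _]].
  destruct (classic (fin_edges (ncls X a) (ncls X b))) as [Hf|Hf].
  - destruct (classic (exists u w, a = NV u /\ b = NV w)) as [[u [w [-> ->]]]|Hnv].
    + exists (QED u w). simpl in Hne, Hf. rewrite Fraw_QED; auto. simpl. repeat split; auto.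
    + exfalso; eapply limit_inf; eauto.
  - exists (QEQ (ncls X a) (ncls X b)). rewrite Fraw_QEQ; auto. simpl.
    repeat split; auto using ncls_class.
Qed.

Lemma Fraw_in X p : in_D p -> in_quot X (Fraw X p).
Proof.
  destruct p as [v|w|a b t]; intro Hp.
  - simpl; exists v; auto.
  - simpl; apply (ncls_class X (NE w) Hp).
  - destruct Hp as [He Ht]. destruct (edge_ok _ _ He) as [Ha [Hb _]].
    destruct (classic (ncls X a = ncls X b)) as [Hs|Hd].
    + rewrite (Fraw_same X a b t Hs); simpl; apply ncls_class; auto.
    + destruct (Fraw_diff X a b t He Hd) as [e [-> [_ [_ Hq]]]]. simpl; auto.
Qed.

Lemma Fraw_compat X X' p : incl X X' -> in_D p -> fbond X X' (Fraw X' p) = Fraw X p.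
Proof.
  intros Hi; destruct p as [v|w|a b t]; simpl.
  - intros _. f_equal. apply (ncls_coarse X X' (NV v)); simpl; auto.
  - intro H. f_equal. apply (ncls_coarse X X' (NE w)); simpl; auto.
  - intros [He Ht]. destruct (edge_ok _ _ He) as [Ha [Hb _]].
    destruct (decide (ncls X' a = ncls X' b)) as [Hs'|Hd'].
    + simpl. rewrite (ncls_coarse X X' a Hi Ha).
      assert (Hs : ncls X a = ncls X b).
      { rewrite <- (ncls_coarse X X' a Hi Ha), Hs'. apply ncls_coarse; auto. }
      destruct (decide (ncls X a = ncls X b)); [auto|contradiction].
    + assert (Hd : forall e, qtail X' e = ncls X' a -> qhead X' e = ncls X' b ->
          fbond X X' (QInner e t) =
          if decide (ncls X a = ncls X b) then QVert (ncls X a)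
          else if decide (~ fin_edges (ncls X a) (ncls X b)) then QInner (QEQ (ncls X a) (ncls X b)) t
          else QInner e t).
      { intros e H1 H2. simpl. rewrite H1, H2, !ncls_coarse; auto. }
      destruct (decide (~ fin_edges (ncls X' a) (ncls X' b))) as [Hf'|Hf'].
      * rewrite Hd; auto.
        destruct (decide (ncls X a = ncls X b)); auto.
        destruct (decide (~ fin_edges (ncls X a) (ncls X b))) as [|Hf]; auto.
        exfalso; apply Hf'. apply NNPP in Hf. revert Hf; apply fin_mono; intros; eapply ncls_mono; eauto.
      * rewrite Hd.
        destruct (decide (ncls X a = ncls X b)); auto.
        destruct (decide (~ fin_edges (ncls X a) (ncls X b))) as [|Hf]; auto.
        f_equal. apply NNPP in Hf.
        destruct (classic (exists u w, a = NV u /\ b = NV w)) as [[u [w [-> ->]]]|Hnv]; auto.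
        exfalso; eapply limit_inf; eauto.
        destruct a as [u|w]; destruct b; simpl; auto.
        destruct a as [u|w]; destruct b; simpl; auto.
Qed.


Definition nodept (a : node V) : DPt V := match a with NV v => DV v | NE w => DEnd w end.

Lemma Fraw_nodept X a : Fraw X (nodept a) = QVert (ncls X a).
Proof. destruct a; reflexivity. Qed.

Lemma D_cases p : in_D p ->
  (exists a, node_ok a /\ p = nodept a) \/
  (exists a b t, p = DInner a b t /\ is_edge a b /\ 0 < t < 1).
Proof.
  destruct p as [v|w|a b t]; simpl; intro H.
  - left; exists (NV v); simpl; auto.
  - left; exists (NE w); simpl; auto.
  - right; exists a, b, t; destruct H; auto.
Qed.

Lemma ev_dist a b : node_ok a -> node_ok b -> a <> b ->
  exists N, forall n, (N <= n)%nat -> ncls (Xn n) a <> ncls (Xn n) b.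
Proof.
  intros Ha Hb Hne. destruct (dist_nodes_sep a b Ha Hb Hne) as [X HX].
  destruct (Xn_cover X) as [N HN]. exists N; intros n Hn.
  eapply ncls_sep_mono; eauto. intros y Hy; eapply Xn_mono; eauto.
Qed.

Lemma ev_dist' a b : node_ok a -> node_ok b ->
  exists N, forall n, (N <= n)%nat -> a <> b -> ncls (Xn n) a <> ncls (Xn n) b.
Proof.
  intros Ha Hb. destruct (classic (a = b)) as [->|Hne]. exists 0%nat; intros; contradiction.
  destruct (ev_dist a b Ha Hb Hne) as [N HN]; exists N; auto.
Qed.

Lemma Fraw_inj p q : in_D p -> in_D q -> (forall n, Fraw (Xn n) p = Fraw (Xn n) q) -> p = q.
Proof.
  intros Hp Hq Heq.
  destruct (D_cases p Hp) as [[a [Ha ->]]|[a [b [t [-> [He Ht]]]]]];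
  destruct (D_cases q Hq) as [[a' [Ha' ->]]|[a' [b' [t' [-> [He' Ht']]]]]].
  - destruct (classic (a = a')) as [->|Hne]; auto.
    destruct (ev_dist a a' Ha Ha' Hne) as [N HN]. specialize (Heq N).
    rewrite !Fraw_nodept in Heq. injection Heq; intro; exfalso; apply (HN N); auto.
  - destruct (edge_ok _ _ He') as [Ha1 [Hb1 Hne1]].
    destruct (ev_dist a' b' Ha1 Hb1 Hne1) as [N HN]. specialize (Heq N).
    destruct (Fraw_diff (Xn N) a' b' t' He' (HN N (le_n _))) as [e [He2 _]].
    rewrite Fraw_nodept, He2 in Heq; discriminate.
  - destruct (edge_ok _ _ He) as [Ha1 [Hb1 Hne1]].
    destruct (ev_dist a b Ha1 Hb1 Hne1) as [N HN]. specialize (Heq N).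
    destruct (Fraw_diff (Xn N) a b t He (HN N (le_n _))) as [e [He2 _]].
    rewrite Fraw_nodept, He2 in Heq; discriminate.
  - destruct (edge_ok _ _ He) as [Ha1 [Hb1 Hne1]].
    destruct (edge_ok _ _ He') as [Ha2 [Hb2 Hne2]].
    destruct (ev_dist a b Ha1 Hb1 Hne1) as [N1 HN1].
    destruct (ev_dist a' b' Ha2 Hb2 Hne2) as [N2 HN2].
    destruct (ev_dist' a a' Ha1 Ha2) as [N3 HN3].
    destruct (ev_dist' b b' Hb1 Hb2) as [N4 HN4].
    set (N := max (max N1 N2) (max N3 N4)).
    specialize (Heq N).
    destruct (Fraw_diff (Xn N) a b t He (HN1 N ltac:(lia))) as [e [E1 [T1 [H1 _]]]].
    destruct (Fraw_diff (Xn N) a' b' t' He' (HN2 N ltac:(lia))) as [e' [E2 [T2 [H2 _]]]].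
    rewrite E1, E2 in Heq. injection Heq; intros <- <-.
    assert (a = a'). { apply NNPP; intro Hn; apply (HN3 N ltac:(lia) Hn). rewrite <- T1; auto. }
    assert (b = b'). { apply NNPP; intro Hn; apply (HN4 N ltac:(lia) Hn). rewrite <- H1; auto. }
    subst; auto.
Qed.

Definition retime (q : QPt V) (s : R) : QPt V :=
  match q with QInner e _ => QInner e s | _ => q end.

Lemma Fraw_retime X a b t s : Fraw X (DInner a b s) = retime (Fraw X (DInner a b t)) s.
Proof. simpl. destruct (decide _); auto. destruct (decide _); auto. Qed.

Lemma Fraw_cong X a b a' b' s : is_edge a b -> ~ (exists u w, a = NV u /\ b = NV w) ->
  ncls X a' = ncls X a -> ncls X b' = ncls X b ->
  Fraw X (DInner a' b' s) = Fraw X (DInner a b s).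
Proof.
  intros He Hnv H1 H2. simpl. rewrite H1, H2.
  destruct (decide _); auto. destruct (decide _) as [|Hf]; auto.
  exfalso; eapply limit_inf; eauto. apply NNPP in Hf; auto.
Qed.

Lemma ncls_transfer X X' a a' : incl X X' -> node_ok a -> node_ok a' ->
  ncls X' a' = ncls X' a -> ncls X a' = ncls X a.
Proof.
  intros Hi Ha Ha' H. rewrite <- (ncls_coarse X X' a' Hi Ha'), H. apply ncls_coarse; auto.
Qed.

Lemma sep_iff X w h : separates X w h <-> C_of X w <> C_of X h.
Proof.
  unfold Defs.separates; split.
  - intros H Heq; apply H; rewrite Heq; tauto.
  - intros H Hall; apply H, pred_ext; auto.
Qed.


Fixpoint pf (v : V) (l : list V) : Prop :=
  match l with nil => True | z :: l' => E v z /\ pf z l' end.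
Fixpoint lastv (v : V) (l : list V) : V :=
  match l with nil => v | z :: l' => lastv z l' end.

Lemma pf_app v l z : pf v l -> E (lastv v l) z -> pf v (l ++ z :: nil).
Proof. revert v; induction l as [|a l IH]; simpl; intros v H1 H2; [tauto|]. destruct H1; split; auto. Qed.
Lemma lastv_app v l z : lastv v (l ++ z :: nil) = z.
Proof. revert v; induction l; simpl; auto. Qed.

Lemma reach_list X u z : reach X u z -> exists l, pf u l /\ lastv u l = z /\
  forall y, In y l -> reach X u y /\ reach X y z.
Proof.
  induction 1 as [Hu|w z Hr [l [H1 [H2 H3]]] Hwz Hz].
  - exists nil; simpl; tauto.
  - exists (l ++ z :: nil); split; [apply pf_app; subst; auto|split; [apply lastv_app|]].
    intros y Hy; apply in_app_or in Hy as [Hy|[<-|[]]].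
    + destruct (H3 y Hy); split; auto. eapply reach_step; eauto.
    + split. eapply reach_step; eauto. apply reach_refl; auto.
Qed.

Lemma nat_max (P : nat -> Prop) B j : P j -> (forall x, P x -> (x < B)%nat) ->
  exists m, P m /\ forall x, P x -> (x <= m)%nat.
Proof.
  revert j; induction B as [|B IH]; intros j Hj HB.
  - specialize (HB j Hj); lia.
  - destruct (classic (P B)) as [HPB|HPB].
    + exists B; split; auto. intros x Hx; specialize (HB x Hx); lia.
    + apply (IH j Hj). intros x Hx. specialize (HB x Hx).
      destruct (Nat.eq_dec x B); [subst; contradiction|lia].
Qed.

Section Dir.
Variable Y : nat -> list V.
Variable d : nat -> V -> Prop.
Hypothesis HY : forall k k', (k <= k')%nat -> incl (Y k) (Y k').
Hypothesis Hcov : forall X : list V, exists k, incl X (Y k).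
Hypothesis Hd : forall k, exists u, ~ In u (Y k) /\ d k = cls (Y k) u.
Hypothesis Hnest : forall k y, d (S k) y -> d k y.

Lemma nest_le k k' : (k <= k')%nat -> forall y, d k' y -> d k y.
Proof. induction 1; auto. Qed.

Lemma d_notin k y : d k y -> ~ In y (Y k).
Proof. destruct (Hd k) as [u [Hu ->]]. apply cls_notin; auto. Qed.

Lemma d_sc k y z : d k y -> d k z -> sc (Y k) y z.
Proof.
  destruct (Hd k) as [u [Hu ->]]. intros [[? _]|[_ H1]] [[? _]|[_ H2]]; try contradiction.
  eapply sc_trans; eauto using sc_sym.
Qed.

Lemma d_closed k y z : d k y -> sc (Y k) y z -> d k z.
Proof.
  destruct (Hd k) as [u [Hu ->]]. intros H1 H2.
  rewrite <- (cls_eq _ _ _ H1). right; split; auto. apply (sc_notin _ _ _ H2).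
Qed.

Lemma dir_end : exists w, is_end w /\ forall k, C_of (Y k) w = d k.
Proof.
  assert (Hx : exists x : nat -> V, forall k, d k (x k)).
  { exists (fun k => proj1_sig (constructive_indefinite_description _
       (let (u, Hu) := constructive_indefinite_description _ (Hd k) in
        ex_intro (fun y => d k y) u (eq_ind_r (fun p => p u) (cls_self _ u) (proj2 Hu))))).
    intro k. apply proj2_sig. }
  destruct Hx as [x Hx].
  assert (Hseg : forall k, exists l, pf (x k) l /\ lastv (x k) l = x (S k) /\ forall y, In y l -> d k y).
  { intro k. assert (Hs : sc (Y k) (x k) (x (S k))) by (apply d_sc; auto).
    destruct (reach_list _ _ _ (proj1 Hs)) as [l [H1 [H2 H3]]].
    exists l; repeat split; auto. intros y Hy. destruct (H3 y Hy) as [R1 R2].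
    apply d_closed with (x k); auto. split; auto. eapply reach_trans; eauto. apply (proj2 Hs). }
  set (seg k := proj1_sig (constructive_indefinite_description _ (Hseg k))).
  assert (Hsg : forall k, pf (x k) (seg k) /\ lastv (x k) (seg k) = x (S k) /\ forall y, In y (seg k) -> d k y).
  { intro k; apply (proj2_sig (constructive_indefinite_description _ (Hseg k))). }
  clearbody seg.
  set (st := fix st (j : nat) : nat * V * list V :=
         match j with
         | O => (O, x O, seg O)
         | S j => match st j with
                  | (k, v, nil) => (S k, v, seg (S k))
                  | (k, v, z :: l) => (k, z, l)
                  end
         end).
  assert (Inv : forall j, let '(k, v, l) := st j in
            d k v /\ pf v l /\ lastv v l = x (S k) /\ forall y, In y l -> d k y).
  { induction j as [|j IH]; simpl. destruct (Hsg 0%nat) as [A [B C]]; auto.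
    fold st. destruct (st j) as [[k v] l]. destruct l as [|z l]; simpl in *.
    - destruct IH as [_ [_ [Hv _]]]. rewrite Hv. destruct (Hsg (S k)) as [A [B C]]. repeat split; auto.
    - destruct IH as [A [[B1 B2] [C D]]]. repeat split; auto. }
  set (W j := snd (fst (st j))). set (K j := fst (fst (st j))).
  assert (Hstep : forall j, W (S j) = W j \/ E (W j) (W (S j))).
  { intro j. specialize (Inv j). unfold W; simpl; fold st.
    destruct (st j) as [[k v] l]; destruct l as [|z l]; simpl; auto. right; apply Inv. }
  assert (Kstep : forall j, (K j <= K (S j))%nat).
  { intro j; unfold K; simpl; fold st. destruct (st j) as [[k v] l]; destruct l; simpl; lia. }
  assert (Kmono : forall j j', (j <= j')%nat -> (K j <= K j')%nat).
  { intros j j' H; induction H; auto. specialize (Kstep m); lia. }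
  assert (Win : forall j, d (K j) (W j)).
  { intro j; specialize (Inv j); unfold W, K; destruct (st j) as [[k v] l]; exact (proj1 Inv). }
  assert (Kprog : forall n j, (length (snd (st j)) <= n)%nat -> exists j', (K j < K j')%nat).
  { induction n as [|n IH]; intros j Hl.
    - exists (S j). unfold K; simpl; fold st. destruct (st j) as [[k v] l]; destruct l; simpl in *; [lia|lia].
    - destruct (st j) as [[k v] l] eqn:Hj. destruct l as [|z l].
      + exists (S j). unfold K; simpl; fold st. rewrite Hj; simpl; lia.
      + destruct (IH (S j)) as [j' Hj'].
        { simpl; fold st; rewrite Hj; simpl in *; lia. }
        exists j'. assert (K (S j) = K j) by (unfold K; simpl; fold st; rewrite Hj; auto). lia. }
  assert (Kunb : forall k, exists j, (k <= K j)%nat).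
  { induction k as [|k [j Hj]]. exists 0%nat; lia.
    destruct (Kprog _ j (le_n _)) as [j' Hj']. exists j'; lia. }
  assert (Wtail : forall k, exists J, forall j, (J <= j)%nat -> d k (W j)).
  { intro k; destruct (Kunb k) as [J HJ]; exists J; intros j Hj.
    apply nest_le with (K j). specialize (Kmono _ _ Hj); lia. auto. }
  assert (Wfin : forall j, exists B, forall x0, W x0 = W j -> (x0 < B)%nat).
  { intro j. destruct (Hcov (W j :: nil)) as [k Hk]. destruct (Wtail k) as [J HJ].
    exists J; intros x0 Hx0. destruct (Nat.lt_ge_cases x0 J) as [|Hge]; auto.
    exfalso; apply (d_notin k (W x0)); auto. rewrite Hx0; apply Hk; left; auto. }
  assert (Hlo : forall j, exists m, W m = W j /\ forall x0, W x0 = W j -> (x0 <= m)%nat).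
  { intro j; destruct (Wfin j) as [B HB]. apply (nat_max _ B j); auto. }
  set (lo j := proj1_sig (constructive_indefinite_description _ (Hlo j))).
  assert (Hlo' : forall j, W (lo j) = W j /\ forall x0, W x0 = W j -> (x0 <= lo j)%nat).
  { intro j; apply (proj2_sig (constructive_indefinite_description _ (Hlo j))). }
  clearbody lo.
  set (kk := fix kk (i : nat) : nat := match i with O => lo O | S i => lo (S (kk i)) end).
  assert (kk_lo : forall i, exists j, kk i = lo j).
  { intros [|i]; simpl; eauto. }
  assert (kk_incr : forall i, (kk i < kk (S i))%nat).
  { intro i; simpl; fold kk. destruct (Hlo' (S (kk i))) as [_ H]. specialize (H (S (kk i)) eq_refl); lia. }
  assert (kk_mono : forall i i', (i < i')%nat -> (kk i < kk i')%nat).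
  { intros i i' H; induction H. apply kk_incr. specialize (kk_incr m); lia. }
  assert (kk_ge : forall i, (i <= kk i)%nat).
  { induction i. lia. specialize (kk_incr i); lia. }
  assert (kk_last : forall i x0, W x0 = W (kk i) -> (x0 <= kk i)%nat).
  { intros i x0 H. destruct (kk_lo i) as [j Hj]. rewrite Hj in *. destruct (Hlo' j) as [A B].
    apply B. rewrite H; auto. }
  set (r i := W (kk i)).
  assert (Hr : solid_ray r).
  { split; [split|].
    - intros i i' Heq. destruct (Nat.lt_trichotomy i i') as [Hlt|[|Hlt]]; auto.
      + specialize (kk_mono _ _ Hlt). specialize (kk_last i (kk i') (eq_sym Heq)). lia.
      + specialize (kk_mono _ _ Hlt). specialize (kk_last i' (kk i) Heq). lia.
    - intro i. unfold r. assert (W (kk (S i)) = W (S (kk i))).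
      { simpl; fold kk. apply (Hlo' (S (kk i))). }
      rewrite H. destruct (Hstep (kk i)) as [H'|H']; auto.
      specialize (kk_last i _ H'); lia.
    - intro X. destruct (Hcov X) as [k Hk]. destruct (Wtail k) as [J HJ].
      exists J; intros i j Hi Hj. apply sc_mono with (Y k); auto.
      apply d_sc; apply HJ; [specialize (kk_ge i)|specialize (kk_ge j)]; lia. }
  exists (fun r' => solid_ray r' /\ equiv_rays r r'). split.
  - exists r; split; auto. tauto.
  - intro k. apply pred_ext; intro y. destruct (Wtail k) as [J HJ].
    assert (Hrt : forall i, (J <= i)%nat -> d k (r i)) by (intros i Hi; apply HJ; specialize (kk_ge i); lia).
    split.
    + intros [Hy [r' [[_ Heq] [N HN]]]]. destruct (Heq (Y k)) as [M HM].
      set (i := max J (max N M)).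
      apply d_closed with (r i). apply Hrt; lia.
      apply sc_trans with (r' i). apply HM; lia. apply sc_sym, HN; lia.
    + intro Hy. split. apply d_notin; auto.
      exists r; split. split; auto; apply equiv_refl; auto.
      exists J; intros i Hi. apply d_sc; auto.
Qed.

End Dir.


Lemma direction (c : nat -> V -> Prop) n0 :
  (forall m, (n0 <= m)%nat -> exists u, ~ In u (Xn m) /\ c m = cls (Xn m) u) ->
  (forall m, (n0 <= m)%nat -> forall y, c (S m) y -> c m y) ->
  exists w, is_end w /\ forall m, (n0 <= m)%nat -> C_of (Xn m) w = c m.
Proof.
  intros H1 H2.
  destruct (dir_end (fun k => Xn (n0 + k)%nat) (fun k => c (n0 + k)%nat)) as [w [Hw Hc]].
  - intro X; destruct (Xn_cover_ge X n0) as [n [Hn Hi]]. exists (n - n0)%nat.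
    replace (n0 + (n - n0))%nat with n by lia; auto.
  - intro k; apply H1; lia.
  - intros k y Hy. apply H2. lia. rewrite <- plus_n_Sm in Hy; auto.
  - exists w; split; auto. intros m Hm. replace m with (n0 + (m - n0))%nat by lia. apply Hc.
Qed.

Lemma coarse_sup X (p : V -> Prop) y : p y -> coarse X p y.
Proof. intro H; exists y; split; auto; apply cls_self. Qed.

Lemma class_seq (c : nat -> V -> Prop) n0 :
  (forall m, (n0 <= m)%nat -> is_class (Xn m) (c m)) ->
  (forall n m, (n0 <= n)%nat -> (n <= m)%nat -> coarse (Xn n) (c m) = c n) ->
  exists a, node_ok a /\ forall m, (n0 <= m)%nat -> ncls (Xn m) a = c m.
Proof.
  intros Hc Hco.
  assert (Hsub : forall n m y, (n0 <= n)%nat -> (n <= m)%nat -> c m y -> c n y).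
  { intros n m y H1 H2 H3. rewrite <- (Hco n m H1 H2). apply coarse_sup; auto. }
  destruct (classic (exists n1 v, (n0 <= n1)%nat /\ In v (Xn n1) /\ c n1 = cls (Xn n1) v))
    as [[n1 [v [H1 [H2 H3]]]]|Hno].
  - exists (NV v); split; simpl; auto. intros m Hm.
    destruct (Nat.le_ge_cases n1 m) as [Hle|Hge].
    + destruct (Hc m Hm) as [u Hu]. rewrite Hu.
      assert (Hu1 : c n1 u) by (apply Hsub with m; auto; rewrite Hu; apply cls_self).
      rewrite H3 in Hu1. apply cls_in in Hu1; auto. subst; auto.
    + rewrite <- (Hco m n1 Hm Hge), H3. symmetry. apply (ncls_coarse _ _ (NV v)); simpl; auto. apply Xn_mono; auto.
  - destruct (direction c n0) as [w [Hw Hcw]].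
    + intros m Hm. destruct (Hc m Hm) as [u Hu]. exists u; split; auto.
      intro Hin. apply Hno. exists m, u; auto.
    + intros m Hm y Hy. apply Hsub with (S m); auto.
    + exists (NE w); split; simpl; auto.
Qed.

Lemma nfin_edge (p q : V -> Prop) : ~ fin_edges p q -> exists u z, p u /\ q z /\ E u z.
Proof.
  intro H. apply NNPP; intro Hn. apply H. exists nil. intros u z Hu Hz Huz.
  apply Hn; eauto.
Qed.

Lemma tail_agree (s : nat -> QPt V) p :
  (forall n m, (n <= m)%nat -> fbond (Xn n) (Xn m) (s m) = s n) -> in_D p ->
  (exists N, forall n, (N <= n)%nat -> Fraw (Xn n) p = s n) -> forall n, Fraw (Xn n) p = s n.
Proof.
  intros Hcomp Hp [N HN] n. rewrite <- (Hcomp n (max n N)) by lia.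
  rewrite <- HN by lia. symmetry; apply Fraw_compat; auto. apply Xn_mono; lia.
Qed.

Lemma qtail_class X e : is_qedge X e -> is_class X (qtail X e) /\ is_class X (qhead X e).
Proof.
  destruct e as [u w|p1 p2]; simpl. intros _; split; [exists u|exists w]; auto. tauto.
Qed.

Lemma Fraw_surj (s : nat -> QPt V) :
  (forall n, in_quot (Xn n) (s n)) ->
  (forall n m, (n <= m)%nat -> fbond (Xn n) (Xn m) (s m) = s n) ->
  exists p, in_D p /\ forall n, Fraw (Xn n) p = s n.
Proof.
  intros Hin Hcomp.
  destruct (classic (exists n0 e t, s n0 = QInner e t)) as [[n0 [e0 [t Hs0]]]|Hno].
  - assert (Hall : forall m, (n0 <= m)%nat -> exists e, s m = QInner e t).
    { intros m Hm. specialize (Hcomp n0 m Hm). rewrite Hs0 in Hcomp.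
      destruct (s m) as [p|e' t']; simpl in Hcomp. discriminate.
      destruct (decide _). discriminate. destruct (decide _); injection Hcomp; intros; subst; eauto. }
    set (e m := match s m with QInner e _ => e | _ => e0 end).
    assert (He : forall m, (n0 <= m)%nat -> s m = QInner (e m) t).
    { intros m Hm; unfold e; destruct (Hall m Hm) as [e' ->]; auto. }
    assert (Hq : forall m, (n0 <= m)%nat -> is_qedge (Xn m) (e m)).
    { intros m Hm; specialize (Hin m); rewrite (He m Hm) in Hin; apply Hin. }
    assert (Ht : 0 < t < 1) by (specialize (Hin n0); rewrite Hs0 in Hin; apply Hin).
    assert (Hrel : forall n m, (n0 <= n)%nat -> (n <= m)%nat ->
      qtail (Xn n) (e n) = coarse (Xn n) (qtail (Xn m) (e m)) /\
      qhead (Xn n) (e n) = coarse (Xn n) (qhead (Xn m) (e m)) /\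
      (e n = QEQ (qtail (Xn n) (e n)) (qhead (Xn n) (e n)) \/ e n = e m)).
    { intros n m H1 H2. pose proof (Hcomp n m H2) as Hc. rewrite (He n H1), (He m ltac:(lia)) in Hc.
      simpl in Hc. destruct (decide _). discriminate.
      destruct (decide _) as [Hf|Hf]; injection Hc; intros <-; simpl; auto.
      pose proof (Hq m ltac:(lia)) as Hqm. destruct (e m) as [u w|p1 p2]; simpl in *.
      + split; [|split]; auto; symmetry; apply (ncls_coarse _ _ (NV _)); simpl; auto; apply Xn_mono; auto.
      + exfalso; apply Hf.
        destruct Hqm as [_ [_ [_ Hnf]]]. intro Hf'. apply Hnf. revert Hf'. apply fin_mono; intros; apply coarse_sup; auto. }
    destruct (classic (exists m u w, (n0 <= m)%nat /\ e m = QED u w)) as [[m [u [w [Hm Hem]]]]|Hnq].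
    + pose proof (Hq m Hm) as Hqm. rewrite Hem in Hqm. destruct Hqm as [Euw [Hne Hf]].
      exists (DInner (NV u) (NV w) t). assert (HD : in_D (DInner (NV u) (NV w) t)) by (simpl; auto).
      split; auto. apply tail_agree; auto. exists m; intros n Hn.
      assert (Hen : e n = QED u w).
      { destruct (Hrel m n Hm Hn) as [_ [_ [H|H]]]; [rewrite Hem in H; discriminate|].
        pose proof (Hcomp m n Hn) as Hc. rewrite (He m Hm), (He n ltac:(lia)), Hem in Hc. simpl in Hc.
        destruct (decide _). discriminate. destruct (decide _); injection Hc; auto. intros; discriminate. }
      rewrite (He n ltac:(lia)), Hen. pose proof (Hq n ltac:(lia)) as Hqn. rewrite Hen in Hqn.
      destruct Hqn as [_ [Hne' Hf']]. apply Fraw_QED; auto.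
    + assert (HQ : forall m, (n0 <= m)%nat -> e m = QEQ (qtail (Xn m) (e m)) (qhead (Xn m) (e m))).
      { intros m Hm. destruct (e m) as [u w|p1 p2] eqn:Hem; simpl; auto. exfalso; apply Hnq; eauto. }
      destruct (class_seq (fun m => qtail (Xn m) (e m)) n0) as [a [Ha Hac]].
      { intros m Hm; apply qtail_class, Hq; auto. }
      { intros n m H1 H2; symmetry; apply Hrel; auto. }
      destruct (class_seq (fun m => qhead (Xn m) (e m)) n0) as [b [Hb Hbc]].
      { intros m Hm; apply qtail_class, Hq; auto. }
      { intros n m H1 H2; symmetry; apply Hrel; auto. }
      assert (Hqm : forall m, (n0 <= m)%nat ->
        ncls (Xn m) a <> ncls (Xn m) b /\ ~ fin_edges (ncls (Xn m) a) (ncls (Xn m) b)).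
      { intros m Hm. pose proof (Hq m Hm) as H. rewrite (HQ m Hm) in H. simpl in H.
        rewrite Hac, Hbc; auto. tauto. }
      assert (Hedge : is_edge a b).
      { destruct a as [u|w]; destruct b as [v|h]; simpl in *.
        - exfalso. destruct (Xn_cover_ge (u :: v :: nil) n0) as [m [Hm Hi]].
          destruct (Hqm m Hm) as [_ Hf]. apply Hf. exists ((u, v) :: nil). intros x y Hx Hy _.
          apply cls_in in Hx; [|apply Hi; simpl; auto]. apply cls_in in Hy; [|apply Hi; simpl; auto].
          subst; left; auto.
        - split; auto. intros X HX. destruct (Xn_cover_ge (u :: X) n0) as [m [Hm Hi]].
          destruct (Hqm m Hm) as [_ Hf]. destruct (nfin_edge _ _ Hf) as [x [z [Hx [Hz Hxz]]]].
          apply cls_in in Hx; [|apply Hi; simpl; auto]. subst x.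
          exists z; split; auto. eapply C_of_mono; eauto. intros y Hy; apply Hi; simpl; auto.
        - split; auto. intros X HX. destruct (Xn_cover_ge (v :: X) n0) as [m [Hm Hi]].
          destruct (Hqm m Hm) as [_ Hf]. destruct (nfin_edge _ _ Hf) as [x [z [Hx [Hz Hxz]]]].
          apply cls_in in Hz; [|apply Hi; simpl; auto]. subst z.
          exists x; split; auto. eapply C_of_mono; eauto. intros y Hy; apply Hi; simpl; auto.
        - split; auto. split; auto. split.
          + intros ->. destruct (Hqm n0 (le_n _)) as [Hne _]. auto.
          + intros X HX. destruct (Xn_cover_ge X n0) as [m [Hm Hi]].
            destruct (Hqm m Hm) as [_ Hf]. destruct (nfin_edge _ _ Hf) as [x [z [Hx [Hz Hxz]]]].
            exists x, z; split; [|split]; auto; eapply C_of_mono; eauto. }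
      exists (DInner a b t). assert (HD : in_D (DInner a b t)) by (simpl; auto).
      split; auto. apply tail_agree; auto. exists n0; intros n Hn.
      destruct (Hqm n Hn) as [H1 H2]. rewrite Fraw_QEQ; auto. rewrite (He n Hn), (HQ n Hn), Hac, Hbc; auto.
  - assert (Hv : forall n, exists c, s n = QVert c).
    { intro n. destruct (s n) as [c|e t] eqn:Hsn; eauto. exfalso; apply Hno; eauto. }
    set (c n := match s n with QVert c => c | _ => fun _ => False end).
    assert (Hc : forall n, s n = QVert (c n)).
    { intro n; unfold c; destruct (Hv n) as [c' ->]; auto. }
    destruct (class_seq c 0) as [a [Ha Hac]].
    { intros m _. specialize (Hin m). rewrite Hc in Hin. apply Hin. }
    { intros n m _ Hnm. specialize (Hcomp n m Hnm). rewrite !Hc in Hcomp. simpl in Hcomp.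
      injection Hcomp; auto. }
    exists (nodept a). split. destruct a; simpl in *; auto.
    intro n. rewrite Fraw_nodept, Hc, Hac; auto. lia.
Qed.


Local Notation qpt := (Defs.qpt V E).
Local Notation quot_open := (Defs.quot_open V E).
Local Notation qspace := (Defs.qspace V E).

Lemma qpt_0 X e : qpt X e 0 = QVert (qtail X e).
Proof. unfold Defs.qpt; destruct (Req_EM_T 0 0); [auto|contradiction]. Qed.
Lemma qpt_1 X e : qpt X e 1 = QVert (qhead X e).
Proof. unfold Defs.qpt; destruct (Req_EM_T 1 0); [lra|]. destruct (Req_EM_T 1 1); [auto|contradiction]. Qed.
Lemma qpt_in X e s : 0 < s < 1 -> qpt X e s = QInner e s.
Proof. intro H; unfold Defs.qpt; destruct (Req_EM_T s 0); [lra|]. destruct (Req_EM_T s 1); [lra|auto]. Qed.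

Definition Up X (U : qspace X -> Prop) (q : QPt V) : Prop := exists h : in_quot X q, U (exist _ q h).

Lemma Up_iff X U q (h : in_quot X q) : U (exist _ q h) <-> Up X U q.
Proof.
  split. intro H; exists h; auto.
  intros [h' H]. replace h with h' by apply proof_irrelevance. auto.
Qed.

Lemma qo_use X U : quot_open X U -> forall e, is_qedge X e -> forall t, 0 <= t <= 1 ->
  Up X U (qpt X e t) -> exists d, 0 < d /\ forall s, 0 <= s <= 1 -> Rabs (s - t) < d -> Up X U (qpt X e s).
Proof. intros HU; exact HU. Qed.

Lemma qo_intro X U : (forall e, is_qedge X e -> forall t, 0 <= t <= 1 ->
  Up X U (qpt X e t) -> exists d, 0 < d /\ forall s, 0 <= s <= 1 -> Rabs (s - t) < d -> Up X U (qpt X e s)) ->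
  quot_open X U.
Proof. intros HU; exact HU. Qed.

Lemma eps_edge X U c e : quot_open X U -> Up X U (QVert c) -> is_qedge X e ->
  exists d, 0 < d /\ (qtail X e = c -> forall s, 0 < s < d -> Up X U (QInner e s)) /\
                     (qhead X e = c -> forall s, 1 - d < s < 1 -> Up X U (QInner e s)).
Proof.
  intros HU Hc He.
  assert (A : exists d0, 0 < d0 /\ (qtail X e = c -> forall s, 0 < s < d0 -> Up X U (QInner e s))).
  { destruct (classic (qtail X e = c)) as [Ht|Ht].
    - assert (H0 : 0 <= 0 <= 1) by lra.
      destruct (qo_use X U HU e He 0 H0) as [d [Hd Hs]]. rewrite qpt_0, Ht; exact Hc.
      exists (Rmin d 1); split. apply Rmin_pos; lra.
      intros _ s Hs1. pose proof (Rmin_l d 1); pose proof (Rmin_r d 1).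
      rewrite <- (qpt_in X e s) by lra. apply Hs. lra. rewrite Rminus_0_r, Rabs_right; lra.
    - exists 1; split; [lra|]. intros; contradiction. }
  assert (B : exists d1, 0 < d1 /\ (qhead X e = c -> forall s, 1 - d1 < s < 1 -> Up X U (QInner e s))).
  { destruct (classic (qhead X e = c)) as [Ht|Ht].
    - assert (H0 : 0 <= 1 <= 1) by lra.
      destruct (qo_use X U HU e He 1 H0) as [d [Hd Hs]]. rewrite qpt_1, Ht; exact Hc.
      exists (Rmin d 1); split. apply Rmin_pos; lra.
      intros _ s Hs1. pose proof (Rmin_l d 1); pose proof (Rmin_r d 1).
      rewrite <- (qpt_in X e s) by lra. apply Hs. lra. rewrite Rabs_left; lra.
    - exists 1; split; [lra|]. intros; contradiction. }
  destruct A as [d0 [Hd0 A]]; destruct B as [d1 [Hd1 B]].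
  exists (Rmin d0 d1). pose proof (Rmin_l d0 d1); pose proof (Rmin_r d0 d1).
  split. apply Rmin_pos; lra. split.
  - intros Ht s Hs; apply A; auto; lra.
  - intros Ht s Hs; apply B; auto; lra.
Qed.

Lemma qedges_finite X : exists L, forall e, is_qedge X e -> In e L.
Proof.
  destruct (Hsol X) as [reps Hreps].
  set (CL := map (cls X) (reps ++ X)).
  assert (HCL : forall p, is_class X p -> In p CL).
  { intros p [u ->]. unfold CL. destruct (classic (In u X)) as [Hu|Hu].
    - apply in_map, in_or_app; auto.
    - destruct (Hreps u Hu) as [r [Hr Hs]].
      assert (cls X u = cls X r).
      { apply cls_eq. right; split; auto. apply (sc_notin _ _ _ Hs). }
      rewrite H. apply in_map, in_or_app; auto. }
  set (fl (p1 p2 : V -> Prop) := epsilon (inhabits (@nil (V * V)))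
        (fun l => forall u w, p1 u -> p2 w -> E u w -> In (u, w) l)).
  exists (flat_map (fun pr => QEQ (fst pr) (snd pr) :: map (fun uw => QED (fst uw) (snd uw)) (fl (fst pr) (snd pr)))
            (list_prod CL CL)).
  intros e He. apply in_flat_map.
  destruct e as [u w|p1 p2]; simpl in He.
  - destruct He as [Euw [Hne Hf]]. exists (cls X u, cls X w). split.
    apply in_prod; apply HCL; [exists u|exists w]; auto.
    right; simpl. apply (in_map (fun uw => QED (fst uw) (snd uw)) _ (u, w)).
    unfold fl. apply (epsilon_spec (inhabits nil) (fun l => forall u0 w0, cls X u u0 -> cls X w w0 -> E u0 w0 -> In (u0, w0) l) Hf);
      auto using cls_self.
  - destruct He as [H1 [H2 _]]. exists (p1, p2); split. apply in_prod; auto. left; auto.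
Qed.

Lemma eps_vertex X U c : quot_open X U -> Up X U (QVert c) ->
  exists eps, 0 < eps /\ forall e, is_qedge X e ->
    (qtail X e = c -> forall s, 0 < s < eps -> Up X U (QInner e s)) /\
    (qhead X e = c -> forall s, 1 - eps < s < 1 -> Up X U (QInner e s)).
Proof.
  intros HU Hc. destruct (qedges_finite X) as [L HL].
  assert (Hgen : forall L, exists eps, 0 < eps /\ forall e, In e L -> is_qedge X e ->
    (qtail X e = c -> forall s, 0 < s < eps -> Up X U (QInner e s)) /\
    (qhead X e = c -> forall s, 1 - eps < s < 1 -> Up X U (QInner e s))).
  { clear L HL. induction L as [|e L [eps1 [He1 IH]]].
    - exists 1; split; [lra|intros e []].
    - destruct (classic (is_qedge X e)) as [Hq|Hq].
      + destruct (eps_edge X U c e HU Hc Hq) as [d [Hd [A B]]].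
        exists (Rmin eps1 d). pose proof (Rmin_l eps1 d); pose proof (Rmin_r eps1 d).
        split. apply Rmin_pos; lra.
        intros e' [<-|He'] Hq'.
        * split; intros Ht s Hs; [apply A|apply B]; auto; lra.
        * destruct (IH e' He' Hq') as [A' B']. split; intros Ht s Hs; [apply A'|apply B']; auto; lra.
      + exists eps1; split; auto. intros e' [<-|He'] Hq'. contradiction. auto. }
  destruct (Hgen L) as [eps [Heps H]]. exists eps; split; auto.
Qed.


Lemma qpt_quot X e s : is_qedge X e -> 0 <= s <= 1 -> in_quot X (qpt X e s).
Proof.
  intros He Hs. destruct (qtail_class X e He) as [H1 H2].
  unfold Defs.qpt; destruct (Req_EM_T s 0); auto. destruct (Req_EM_T s 1); auto.
  simpl; split; auto; lra.
Qed.

Lemma qo_raw X (Ur : QPt V -> Prop) :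
  (forall e, is_qedge X e -> forall t, 0 <= t <= 1 -> Ur (qpt X e t) ->
     exists d, 0 < d /\ forall s, 0 <= s <= 1 -> Rabs (s - t) < d -> Ur (qpt X e s)) ->
  quot_open X (fun q => Ur (proj1_sig q)).
Proof.
  intro H. apply qo_intro. intros e He t Ht [h Hu]. simpl in Hu.
  destruct (H e He t Ht Hu) as [d [Hd Hs]]. exists d; split; auto.
  intros s Hs1 Hs2. exists (qpt_quot X e s He Hs1). simpl. auto.
Qed.

Lemma t_cases t : 0 <= t <= 1 -> t = 0 \/ t = 1 \/ 0 < t < 1.
Proof. intro H; destruct (Req_EM_T t 0); auto. destruct (Req_EM_T t 1); auto. right; right; lra. Qed.

Lemma abs_lt x y d : Rabs (x - y) < d -> y - d < x < y + d.
Proof. intro H; apply Rabs_def2 in H; lra. Qed.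

Definition UP X (P : (V -> Prop) -> Prop) eps (q : QPt V) : Prop :=
  match q with
  | QVert c => P c
  | QInner e t => (P (qtail X e) /\ P (qhead X e)) \/
                  (P (qtail X e) /\ ~ P (qhead X e) /\ t < eps) \/
                  (~ P (qtail X e) /\ P (qhead X e) /\ 1 - eps < t)
  end.

Lemma UP_open X P eps : 0 < eps -> quot_open X (fun q => UP X P eps (proj1_sig q)).
Proof.
  intro Heps. apply qo_raw. intros e He t Ht Hu.
  destruct (t_cases t Ht) as [->|[->|Hti]].
  - rewrite qpt_0 in Hu; simpl in Hu.
    destruct (classic (P (qhead X e))) as [Hh|Hh].
    + exists 1; split; [lra|]. intros s Hs _. destruct (t_cases s Hs) as [->|[->|Hsi]].
      rewrite qpt_0; auto. rewrite qpt_1; auto. rewrite qpt_in; auto. simpl; auto.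
    + exists (Rmin eps 1); split. apply Rmin_pos; lra.
      pose proof (Rmin_l eps 1); pose proof (Rmin_r eps 1).
      intros s Hs Habs. apply abs_lt in Habs. destruct (t_cases s Hs) as [->|[->|Hsi]].
      rewrite qpt_0; auto. lra. rewrite qpt_in; auto. simpl. right; left; repeat split; auto; lra.
  - rewrite qpt_1 in Hu; simpl in Hu.
    destruct (classic (P (qtail X e))) as [Hh|Hh].
    + exists 1; split; [lra|]. intros s Hs _. destruct (t_cases s Hs) as [->|[->|Hsi]].
      rewrite qpt_0; auto. rewrite qpt_1; auto. rewrite qpt_in; auto. simpl; auto.
    + exists (Rmin eps 1); split. apply Rmin_pos; lra.
      pose proof (Rmin_l eps 1); pose proof (Rmin_r eps 1).
      intros s Hs Habs. apply abs_lt in Habs. destruct (t_cases s Hs) as [->|[->|Hsi]].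
      lra. rewrite qpt_1; auto. rewrite qpt_in; auto. simpl. right; right; repeat split; auto; lra.
  - rewrite qpt_in in Hu; auto; simpl in Hu.
    assert (Hm : 0 < Rmin t (1 - t)) by (apply Rmin_pos; lra).
    pose proof (Rmin_l t (1 - t)); pose proof (Rmin_r t (1 - t)).
    destruct Hu as [Hu|[[H1 [H2 H3]]|[H1 [H2 H3]]]].
    + exists (Rmin t (1 - t)); split; auto. intros s Hs Habs. apply abs_lt in Habs.
      rewrite qpt_in by lra. simpl; auto.
    + exists (Rmin (Rmin t (1 - t)) (eps - t)); split. apply Rmin_pos; lra.
      pose proof (Rmin_l (Rmin t (1 - t)) (eps - t)); pose proof (Rmin_r (Rmin t (1 - t)) (eps - t)).
      intros s Hs Habs. apply abs_lt in Habs.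
      rewrite qpt_in by lra. simpl. right; left; repeat split; auto; lra.
    + exists (Rmin (Rmin t (1 - t)) (t - (1 - eps))); split. apply Rmin_pos; lra.
      pose proof (Rmin_l (Rmin t (1 - t)) (t - (1 - eps))); pose proof (Rmin_r (Rmin t (1 - t)) (t - (1 - eps))).
      intros s Hs Habs. apply abs_lt in Habs.
      rewrite qpt_in by lra. simpl. right; right; repeat split; auto; lra.
Qed.

Definition TQ (Q : node V -> Prop) eps (p : DPt V) : Prop :=
  match p with
  | DV y => Q (NV y)
  | DEnd h => Q (NE h)
  | DInner a b t => (Q a /\ Q b) \/ (Q a /\ ~ Q b /\ t < eps) \/ (~ Q a /\ Q b /\ 1 - eps < t)
  end.

Lemma TQ_iff X Q P eps p : (forall a, node_ok a -> (Q a <-> P (ncls X a))) -> in_D p ->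
  (TQ Q eps p <-> UP X P eps (Fraw X p)).
Proof.
  intros HQ Hp. destruct p as [y|h|a b t].
  - simpl. apply (HQ (NV y)); simpl; auto.
  - simpl. apply (HQ (NE h)); simpl; auto.
  - destruct Hp as [He Ht]. destruct (edge_ok _ _ He) as [Ha [Hb _]].
    destruct (classic (ncls X a = ncls X b)) as [Hs|Hd].
    + rewrite Fraw_same; auto. simpl. rewrite (HQ a Ha), (HQ b Hb), <- Hs. tauto.
    + destruct (Fraw_diff X a b t He Hd) as [e [-> [T1 [T2 _]]]]. simpl.
      rewrite (HQ a Ha), (HQ b Hb), T1, T2. tauto.
Qed.

Lemma star_TQ v eps p : in_D p -> (star_set V v eps p <-> TQ (fun a => a = NV v) eps p).
Proof.
  intro Hp. unfold star_set. destruct p as [y|h|a b t]; simpl.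
  - split. intros [H|[a [b [t [H _]]]]]; [injection H; intros ->; auto|discriminate].
    intro H; injection H; intros ->; auto.
  - split. intros [H|[a [b [t [H _]]]]]; discriminate. intro; discriminate.
  - destruct Hp as [He Ht]. destruct (edge_ok _ _ He) as [_ [_ Hne]].
    split.
    + intros [H|[a' [b' [t' [H H']]]]]; [discriminate|]. injection H; intros -> -> ->.
      destruct (classic (a' = NV v)); destruct (classic (b' = NV v)); subst; try tauto.
    + intros [[-> ->]|[[-> [_ H]]|[_ [-> H]]]]; [tauto| |]; right; eauto 10.
Qed.

Lemma chat_TQ X w eps p : Chat_set V E X w eps p <-> TQ (node_in X (C_of X w)) eps p.
Proof. destruct p; simpl; tauto. Qed.

Lemma star_Q X v a : In v X -> node_ok a -> (a = NV v <-> ncls X a = cls X v).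
Proof.
  intros Hv Ha; split. intros ->; auto.
  destruct a as [u|h]; simpl; intro H.
  - assert (Hu := cls_self X u). rewrite H in Hu. apply cls_in in Hu; auto; subst; auto.
  - assert (Hu := cls_self X v). rewrite <- H in Hu. apply C_of_notin in Hu; contradiction.
Qed.

Lemma chat_Q X0 X w a : incl X0 X -> is_end w -> node_ok a ->
  (node_in X0 (C_of X0 w) a <-> (forall y, ncls X a y -> C_of X0 w y)).
Proof.
  intros Hi Hw Ha. rewrite node_in_iff; auto. apply ncls_sub_iff; auto.
  apply (ncls_class X0 (NE w)); auto. apply (ncls_class X0 (NE w)); auto.
Qed.

Definition Uint u w lo hi (q : QPt V) : Prop := exists s, q = QInner (QED u w) s /\ lo < s < hi.

Lemma Uint_open X u w lo hi : 0 <= lo -> hi <= 1 -> quot_open X (fun q => Uint u w lo hi (proj1_sig q)).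
Proof.
  intros Hlo Hhi. apply qo_raw. intros e He t Ht [s [Hq Hs]].
  destruct (t_cases t Ht) as [->|[->|Hti]].
  - rewrite qpt_0 in Hq; discriminate.
  - rewrite qpt_1 in Hq; discriminate.
  - rewrite qpt_in in Hq; auto. injection Hq; intros -> ->.
    exists (Rmin (s - lo) (hi - s)); split. apply Rmin_pos; lra.
    pose proof (Rmin_l (s - lo) (hi - s)); pose proof (Rmin_r (s - lo) (hi - s)).
    intros s' Hs' Habs. apply abs_lt in Habs. rewrite qpt_in by lra. exists s'; split; auto; lra.
Qed.

Lemma Uint_iff X u w lo hi p : In u X -> In w X -> E u w -> in_D p ->
  (interval_set V u w lo hi p <-> Uint u w lo hi (Fraw X p)).
Proof.
  intros Hu Hw Euw Hp. unfold interval_set, Uint. destruct p as [y|h|a b t].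
  - split; intros [s [H _]]; discriminate.
  - split; intros [s [H _]]; discriminate.
  - split.
    + intros [s [H Hs]]. injection H; intros -> -> ->. exists s; split; auto.
      apply Fraw_QED.
      * intro H'. assert (Hw' := cls_self X w). rewrite <- H' in Hw'. apply cls_in in Hw'; auto.
        subst; apply (Hirr _ Euw).
      * exists ((u, w) :: nil). intros x z Hx Hz _. apply cls_in in Hx; auto. apply cls_in in Hz; auto.
        subst; left; auto.
    + intros [s [H Hs]]. simpl in H.
      destruct (decide _). discriminate. destruct (decide _). injection H; intros; discriminate.
      destruct a as [a|a]; destruct b as [b|b]; simpl in H; injection H; intros; try discriminate.
      subst. exists s; split; auto.
Qed.

Definition Ubun X (P1 P2 : (V -> Prop) -> Prop) t0 eps (q : QPt V) : Prop :=
  exists e s, q = QInner e s /\ P1 (qtail X e) /\ P2 (qhead X e) /\ 0 < s < 1 /\ Rabs (s - t0) < eps.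

Lemma Ubun_open X P1 P2 t0 eps : quot_open X (fun q => Ubun X P1 P2 t0 eps (proj1_sig q)).
Proof.
  apply qo_raw. intros e He t Ht [e' [s [Hq [H1 [H2 [Hs Habs]]]]]].
  destruct (t_cases t Ht) as [->|[->|Hti]].
  - rewrite qpt_0 in Hq; discriminate.
  - rewrite qpt_1 in Hq; discriminate.
  - rewrite qpt_in in Hq; auto. injection Hq; intros <- <-.
    set (d := Rmin (Rmin t (1 - t)) (eps - Rabs (t - t0))).
    assert (Hd : 0 < d) by (apply Rmin_pos; [apply Rmin_pos|]; lra).
    pose proof (Rmin_l (Rmin t (1 - t)) (eps - Rabs (t - t0))).
    pose proof (Rmin_r (Rmin t (1 - t)) (eps - Rabs (t - t0))).
    pose proof (Rmin_l t (1 - t)); pose proof (Rmin_r t (1 - t)).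
    exists d; split; auto. intros s' Hs' Habs'.
    assert (Htri : Rabs (s' - t0) <= Rabs (s' - t) + Rabs (t - t0)).
    { replace (s' - t0) with ((s' - t) + (t - t0)) by ring. apply Rabs_triang. }
    fold d in H, H0. apply abs_lt in Habs' as Hb.
    rewrite qpt_in by lra. exists e, s'; repeat split; auto; lra.
Qed.

Lemma Ubun_iff X Q1 Q2 P1 P2 t0 eps p :
  (forall a, node_ok a -> (Q1 a <-> P1 (ncls X a))) ->
  (forall a, node_ok a -> (Q2 a <-> P2 (ncls X a))) ->
  (forall a, node_ok a -> ~ (P1 (ncls X a) /\ P2 (ncls X a))) -> in_D p ->
  (bundle_set V Q1 Q2 t0 eps p <-> Ubun X P1 P2 t0 eps (Fraw X p)).
Proof.
  intros HQ1 HQ2 Hdis Hp. unfold bundle_set, Ubun. destruct p as [y|h|a b t].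
  - split. intros [a [b [t [H _]]]]; discriminate. intros [e [s [H _]]]; discriminate.
  - split. intros [a [b [t [H _]]]]; discriminate. intros [e [s [H _]]]; discriminate.
  - destruct Hp as [He Ht]. destruct (edge_ok _ _ He) as [Ha [Hb _]].
    destruct (classic (ncls X a = ncls X b)) as [Hs|Hd].
    + rewrite Fraw_same; auto. split.
      * intros [a' [b' [t' [H [H1 [H2 _]]]]]]. injection H; intros <- <- <-.
        exfalso; apply (Hdis a Ha). rewrite <- (HQ1 a Ha). rewrite Hs, <- (HQ2 b Hb). auto.
      * intros [e [s [H _]]]; discriminate.
    + destruct (Fraw_diff X a b t He Hd) as [e [-> [T1 [T2 _]]]]. split.
      * intros [a' [b' [t' [H [H1 [H2 H3]]]]]]. injection H; intros <- <- <-.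
        exists e, t; rewrite T1, T2, <- (HQ1 a Ha), <- (HQ2 b Hb); auto.
      * intros [e' [s [H [H1 [H2 H3]]]]]. injection H; intros <- <-.
        exists a, b, t; rewrite (HQ1 a Ha), (HQ2 b Hb), <- T1, <- T2; auto.
Qed.


Local Notation Dspace := (Defs.Dspace V E).
Local Notation limspace := (Defs.limspace V E enum).
Local Notation D_basic := (Defs.D_basic V E).
Local Notation D_open := (Defs.D_open V E).
Local Notation lim_open := (Defs.lim_open V E enum).

Definition Fq n (p : Dspace) : qspace (Xn n) :=
  exist _ (Fraw (Xn n) (proj1_sig p)) (Fraw_in _ _ (proj2_sig p)).

Definition Fmap (p : Dspace) : limspace.
Proof.
  unfold Defs.limspace. refine (exist _ (fun n => Fq n p) _).
  intros n m H. exact (Fraw_compat (Xn n) (Xn m) (proj1_sig p) (Xn_mono n m H) (proj2_sig p)).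
Defined.

Lemma lim_eq (s s' : limspace) :
  (forall n, proj1_sig (proj1_sig s n) = proj1_sig (proj1_sig s' n)) -> s = s'.
Proof.
  destruct s as [s Hs]; destruct s' as [s' Hs']; simpl; intro H.
  assert (s = s').
  { apply functional_extensionality_dep; intro n. specialize (H n).
    destruct (s n) as [q h]; destruct (s' n) as [q' h']; simpl in H; subst.
    f_equal; apply proof_irrelevance. }
  subst; f_equal; apply proof_irrelevance.
Qed.

Lemma Fmap_inj p q : Fmap p = Fmap q -> p = q.
Proof.
  intro H. destruct p as [p Hp]; destruct q as [q Hq].
  assert (p = q).
  { apply Fraw_inj; auto. intro n.
    assert (H' := f_equal (fun s : limspace => proj1_sig (proj1_sig s n)) H). exact H'. }
  subst; f_equal; apply proof_irrelevance.
Qed.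

Lemma Fmap_surj s : exists p, Fmap p = s.
Proof.
  destruct (Fraw_surj (fun n => proj1_sig (proj1_sig s n))) as [p [Hp Hs]].
  - intro n; apply (proj2_sig (proj1_sig s n)).
  - intros n m H; apply (proj2_sig s n m H).
  - exists (exist _ p Hp). apply lim_eq; intro n; simpl; auto.
Qed.

Definition dpt0 : Dspace := exist _ (DV (enum 0%nat)) I.

Definition Gmap (s : limspace) : Dspace := epsilon (inhabits dpt0) (fun p => Fmap p = s).

Lemma FG s : Fmap (Gmap s) = s.
Proof. unfold Gmap. apply (epsilon_spec (inhabits dpt0) (fun p => Fmap p = s)). apply Fmap_surj. Qed.

Lemma GF p : Gmap (Fmap p) = p.
Proof. apply Fmap_inj. apply FG. Qed.

Lemma D_open_nbhd (A : Dspace -> Prop) :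
  (forall x, A x -> exists S, D_basic S /\ S (proj1_sig x) /\ forall y, S (proj1_sig y) -> A y) ->
  D_open A.
Proof.
  intro H.
  set (S (i : {x | A x}) := proj1_sig (constructive_indefinite_description _ (H (proj1_sig i) (proj2_sig i)))).
  assert (HS : forall i, D_basic (S i) /\ S i (proj1_sig (proj1_sig i)) /\ forall y, S i (proj1_sig y) -> A y).
  { intro i; apply (proj2_sig (constructive_indefinite_description _ (H (proj1_sig i) (proj2_sig i)))). }
  clearbody S.
  replace A with (fun x => exists i : {x | A x}, (fun y : Dspace => S i (proj1_sig y)) x).
  - apply gen_union. intro i. apply gen_base. exists (S i); split; auto. apply HS.
  - apply pred_ext; intro x; split.
    + intros [i Hi]. apply (HS i); auto.
    + intro Hx. exists (exist _ x Hx). apply (HS (exist _ x Hx)).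
Qed.

Lemma nbhd_inner X U c eps (Q : node V -> Prop) :
  (forall a, node_ok a -> Q a -> ncls X a = c) -> Up X U (QVert c) ->
  (forall e, is_qedge X e ->
    (qtail X e = c -> forall s, 0 < s < eps -> Up X U (QInner e s)) /\
    (qhead X e = c -> forall s, 1 - eps < s < 1 -> Up X U (QInner e s))) ->
  forall a b t, in_D (DInner a b t) -> ((Q a /\ Q b) \/ (Q a /\ t < eps) \/ (Q b /\ 1 - eps < t)) ->
  Up X U (Fraw X (DInner a b t)).
Proof.
  intros HQ Hc Heps a b t [He Ht] Hor. destruct (edge_ok _ _ He) as [Ha [Hb _]].
  destruct (classic (ncls X a = ncls X b)) as [Hs|Hd].
  - rewrite Fraw_same; auto.
    destruct Hor as [[Qa _]|[[Qa _]|[Qb _]]]; [rewrite (HQ a Ha Qa)|rewrite (HQ a Ha Qa)|rewrite Hs, (HQ b Hb Qb)]; auto.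
  - destruct (Fraw_diff X a b t He Hd) as [e [-> [T1 [T2 Hq]]]].
    destruct (Heps e Hq) as [A B].
    destruct Hor as [[Qa Qb]|[[Qa H]|[Qb H]]].
    + exfalso; apply Hd; rewrite (HQ a Ha Qa), (HQ b Hb Qb); auto.
    + apply A; auto. rewrite T1; auto. lra.
    + apply B; auto. rewrite T2; auto. lra.
Qed.

Lemma lim_nbhd X a b t delta : is_edge a b -> ~ (exists u w, a = NV u /\ b = NV w) -> 0 < t < 1 -> 0 < delta ->
  exists S, D_basic S /\ S (DInner a b t) /\ forall q, in_D q -> S q ->
    exists a' b' s, q = DInner a' b' s /\ ncls X a' = ncls X a /\ ncls X b' = ncls X b /\
      0 < s < 1 /\ Rabs (s - t) < delta.
Proof.
  intros He Hnv Ht Hd. destruct (edge_ok _ _ He) as [Ha [Hb Hne]].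
  assert (H0 : Rabs (t - t) < delta) by (rewrite Rminus_diag, Rabs_R0; auto).
  destruct a as [v|w]; destruct b as [v'|h].
  - exfalso; eauto.
  - set (X' := v :: X). assert (Hi : incl X X') by (intros y Hy; right; auto).
    exists (bundle_set V (fun a => a = NV v) (node_in X' (C_of X' h)) t delta). split; [|split].
    + right; right; right; right; left. exists v, h, X', t, delta. split; [exact He|split; [left; auto|split; [auto|split; [auto|reflexivity]]]].
    + exists (NV v), (NE h), t. split; [reflexivity|split; [reflexivity|split; [split; [exact Hb|tauto]|split; [exact Ht|exact H0]]]].
    + intros q Hq [a' [b' [s [-> [Q1 [Q2 [Hs Habs]]]]]]]. subst a'.
      destruct Hq as [He' _]. destruct (edge_ok _ _ He') as [_ [Hb' _]].
      exists (NV v), b', s. split; [reflexivity|split; [reflexivity|split; [|split; [exact Hs|exact Habs]]]].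
      apply (ncls_transfer X X' (NE h) b'); auto.
      apply node_in_iff in Q2; auto. apply (ncls_class X' (NE h)); auto.
  - set (X' := v' :: X). assert (Hi : incl X X') by (intros y Hy; right; auto).
    exists (bundle_set V (node_in X' (C_of X' w)) (fun a => a = NV v') t delta). split; [|split].
    + right; right; right; right; right. exists w, v', X', t, delta. split; [exact He|split; [left; auto|split; [auto|split; [auto|reflexivity]]]].
    + exists (NE w), (NV v'), t. split; [reflexivity|split; [split; [exact Ha|tauto]|split; [reflexivity|split; [exact Ht|exact H0]]]].
    + intros q Hq [a' [b' [s [-> [Q1 [Q2 [Hs Habs]]]]]]]. subst b'.
      destruct Hq as [He' _]. destruct (edge_ok _ _ He') as [Ha' _].
      exists a', (NV v'), s. split; [reflexivity|split; [|split; [reflexivity|split; [exact Hs|exact Habs]]]].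
      apply (ncls_transfer X X' (NE w) a'); auto.
      apply node_in_iff in Q1; auto. apply (ncls_class X' (NE w)); auto.
  - assert (Hwh : w <> h) by (intro; subst; auto).
    destruct (end_sep w h Ha Hb Hwh) as [X0 HX0].
    set (X' := X0 ++ X). assert (Hi : incl X X') by (intros y Hy; apply in_or_app; auto).
    assert (Hsep : separates X' w h).
    { apply sep_iff. apply (ncls_sep_mono X0 X' (NE w) (NE h)); auto.
      intros y Hy; apply in_or_app; auto. apply sep_iff; auto. }
    exists (bundle_set V (node_in X' (C_of X' w)) (node_in X' (C_of X' h)) t delta). split; [|split].
    + right; right; right; left. exists w, h, X', t, delta. split; [exact He|split; [exact Hsep|split; [auto|split; [auto|reflexivity]]]].
    + exists (NE w), (NE h), t. split; [reflexivity|split; [split; [exact Ha|tauto]|split; [split; [exact Hb|tauto]|split; [exact Ht|exact H0]]]].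
    + intros q Hq [a' [b' [s [-> [Q1 [Q2 [Hs Habs]]]]]]].
      destruct Hq as [He' _]. destruct (edge_ok _ _ He') as [Ha' [Hb' _]].
      exists a', b', s. split; [reflexivity|split; [|split; [|split; [exact Hs|exact Habs]]]].
      * apply (ncls_transfer X X' (NE w) a'); auto.
        apply node_in_iff in Q1; auto. apply (ncls_class X' (NE w)); auto.
      * apply (ncls_transfer X X' (NE h) b'); auto.
        apply node_in_iff in Q2; auto. apply (ncls_class X' (NE h)); auto.
Qed.

Lemma F_nbhd n U : quot_open (Xn n) U -> forall x : Dspace, U (Fq n x) ->
  exists S, D_basic S /\ S (proj1_sig x) /\ forall y : Dspace, S (proj1_sig y) -> U (Fq n y).
Proof.
  intros HU x Hx. set (X := Xn n).
  assert (Hconv : forall y : Dspace, Up X U (Fraw X (proj1_sig y)) -> U (Fq n y)).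
  { intros y Hy. unfold Fq. apply (proj2 (Up_iff X U _ _)); auto. }
  unfold Fq in Hx. apply Up_iff in Hx. fold X in Hx.
  destruct x as [p Hp]; simpl in Hx |- *.
  destruct (D_cases p Hp) as [[a [Ha ->]]|[a [b [t [-> [He Ht]]]]]].
  - rewrite Fraw_nodept in Hx.
    destruct (eps_vertex X U _ HU Hx) as [eps [Heps Hev]].
    destruct a as [v|w].
    + exists (star_set V v eps). split; [|split].
      * left; exists v, eps; auto.
      * left; auto.
      * intros [q Hq] Hy; apply Hconv; simpl in Hy |- *.
        apply (star_TQ v eps q Hq) in Hy.
        destruct q as [y|h|a0 b0 t0]; simpl in Hy.
        -- injection Hy; intros ->; auto.
        -- discriminate.
        -- apply (nbhd_inner X U (ncls X (NV v)) eps (fun a => a = NV v)); auto.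
           intros a1 _ ->; auto. tauto.
    + exists (Chat_set V E X w eps). split; [|split].
      * right; right; left; exists X, w, eps; auto.
      * simpl. split; [exact Ha|tauto].
      * intros [q Hq] Hy; apply Hconv; simpl in Hy |- *.
        assert (HC : is_class X (C_of X w)) by apply (ncls_class X (NE w) Ha).
        apply chat_TQ in Hy.
        destruct q as [y|h|a0 b0 t0]; simpl in Hy.
        -- simpl. rewrite <- (class_self _ _ _ HC Hy). auto.
        -- apply (node_in_iff X _ (NE h) Hq HC) in Hy. simpl in Hy |- *. rewrite Hy. auto.
        -- apply (nbhd_inner X U (ncls X (NE w)) eps (node_in X (C_of X w))); auto.
           intros a1 Ha' Hq'. apply node_in_iff in Hq'; auto. tauto.
  - assert (Hdel : exists delta, 0 < delta /\ forall s, 0 < s < 1 -> Rabs (s - t) < delta ->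
        Up X U (retime (Fraw X (DInner a b t)) s)).
    { destruct (classic (ncls X a = ncls X b)) as [Hs|Hd].
      - exists 1; split; [lra|]. rewrite Fraw_same in Hx |- *; auto.
      - destruct (Fraw_diff X a b t He Hd) as [e [He2 [_ [_ Hq]]]]. rewrite He2 in Hx |- *.
        rewrite <- (qpt_in X e t Ht) in Hx.
        destruct (qo_use X U HU e Hq t ltac:(lra) Hx) as [d [Hd0 Hs]].
        exists d; split; auto. intros s Hs1 Hs2. simpl. rewrite <- (qpt_in X e s Hs1). apply Hs; auto; lra. }
    destruct Hdel as [delta [Hdelta Hdel]].
    destruct (classic (exists u w, a = NV u /\ b = NV w)) as [[u [w [-> ->]]]|Hnv].
    + set (lo := Rmax 0 (t - delta)). set (hi := Rmin 1 (t + delta)).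
      assert (Hlo1 : 0 <= lo) by apply Rmax_l. assert (Hlo2 : t - delta <= lo) by apply Rmax_r.
      assert (Hlo3 : lo < t) by (apply Rmax_lub_lt; lra).
      assert (Hhi1 : hi <= 1) by apply Rmin_l. assert (Hhi2 : hi <= t + delta) by apply Rmin_r.
      assert (Hhi3 : t < hi) by (apply Rmin_glb_lt; lra).
      exists (interval_set V u w lo hi). split; [|split].
      * right; left. exists u, w, lo, hi. repeat split; auto. lra.
      * exists t; auto.
      * intros [q Hq] [s [Heq Hs]]; apply Hconv; simpl in Heq |- *. subst q.
        rewrite (Fraw_retime X _ _ t s). apply Hdel. apply Hq.
        apply Rabs_def1; lra.
    + destruct (lim_nbhd X a b t delta He Hnv Ht Hdelta) as [S [HS [HSp HSq]]].
      exists S; split; [|split]; auto.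
      intros [q Hq] Hy; apply Hconv; simpl in Hy |- *.
      destruct (HSq q Hq Hy) as [a' [b' [s [-> [H1 [H2 [Hs Habs]]]]]]].
      rewrite (Fraw_cong X a b a' b' s He Hnv H1 H2), (Fraw_retime X a b t s). auto.
Qed.


Lemma G_reduce S : (exists n Ur, quot_open (Xn n) (fun q => Ur (proj1_sig q)) /\
    forall p, in_D p -> (S p <-> Ur (Fraw (Xn n) p))) ->
  lim_open (fun s => S (proj1_sig (Gmap s))).
Proof.
  intros [n [Ur [HU Hiff]]].
  replace (fun s => S (proj1_sig (Gmap s))) with
    (fun s : limspace => (fun q : qspace (Xn n) => Ur (proj1_sig q)) (proj1_sig s n)).
  - apply gen_base. exists n, (fun q => Ur (proj1_sig q)). split; auto.
  - apply pred_ext; intro s.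
    assert (H := f_equal (fun s' : limspace => proj1_sig (proj1_sig s' n)) (FG s)).
    simpl in H. rewrite <- H. rewrite Hiff. tauto. apply (proj2_sig (Gmap s)).
Qed.

Lemma G_base S : D_basic S -> lim_open (fun s => S (proj1_sig (Gmap s))).
Proof.
  intro HS; apply G_reduce.
  destruct HS as [[v [eps [Heps ->]]]|[[u [w [lo [hi [Euw [Hlo [Hlh [Hhi ->]]]]]]]]|
                 [[X0 [w [eps [Hw [Heps ->]]]]]|[[w [h [X0 [t0 [eps [Hle [Hsep [Ht0 [Heps ->]]]]]]]]]|
                 [[v [w [X0 [t0 [eps [Hle [Hv [Ht0 [Heps ->]]]]]]]]]|
                  [w [v [X0 [t0 [eps [Hle [Hv [Ht0 [Heps ->]]]]]]]]]]]]]].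
  - destruct (Xn_cover (v :: nil)) as [n Hn].
    exists n, (UP (Xn n) (fun c => c = cls (Xn n) v) eps). split. apply UP_open; auto.
    intros p Hp. rewrite star_TQ; auto. apply TQ_iff; auto. intros a Ha. apply star_Q; auto.
    apply Hn; left; auto.
  - destruct (Xn_cover (u :: w :: nil)) as [n Hn].
    exists n, (Uint u w lo hi). split. apply Uint_open; lra.
    intros p Hp. apply Uint_iff; auto; apply Hn; simpl; auto.
  - destruct (Xn_cover X0) as [n Hn].
    exists n, (UP (Xn n) (fun c => forall y, c y -> C_of X0 w y) eps). split. apply UP_open; auto.
    intros p Hp. rewrite chat_TQ. apply TQ_iff; auto. intros a Ha. apply chat_Q; auto.
  - destruct (Xn_cover X0) as [n Hn]. destruct Hle as [Hw [Hh _]].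
    exists n, (Ubun (Xn n) (fun c => forall y, c y -> C_of X0 w y) (fun c => forall y, c y -> C_of X0 h y) t0 eps).
    split. apply Ubun_open.
    intros p Hp. apply Ubun_iff; auto.
    + intros a Ha; apply chat_Q; auto.
    + intros a Ha; apply chat_Q; auto.
    + intros a Ha [H1 H2]. destruct (ncls_ne (Xn n) a Ha) as [y Hy].
      apply (proj1 (sep_iff X0 w h) Hsep).
      apply class_meet with (X := X0) (y := y); auto.
      apply (ncls_class X0 (NE w)); auto. apply (ncls_class X0 (NE h)); auto.
  - destruct (Xn_cover X0) as [n Hn]. destruct Hle as [Hw _].
    exists n, (Ubun (Xn n) (fun c => c = cls (Xn n) v) (fun c => forall y, c y -> C_of X0 w y) t0 eps).
    split. apply Ubun_open.
    intros p Hp. apply Ubun_iff; auto.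
    + intros a Ha; apply star_Q; auto.
    + intros a Ha; apply chat_Q; auto.
    + intros a Ha [H1 H2]. rewrite H1 in H2. apply (C_of_notin X0 w v); auto. apply H2, cls_self.
  - destruct (Xn_cover X0) as [n Hn]. destruct Hle as [Hw _].
    exists n, (Ubun (Xn n) (fun c => forall y, c y -> C_of X0 w y) (fun c => c = cls (Xn n) v) t0 eps).
    split. apply Ubun_open.
    intros p Hp. apply Ubun_iff; auto.
    + intros a Ha; apply chat_Q; auto.
    + intros a Ha; apply star_Q; auto.
    + intros a Ha [H1 H2]. rewrite H2 in H1. apply (C_of_notin X0 w v); auto. apply H1, cls_self.
Qed.

Lemma main_thm : homeomorphic D_open lim_open.
Proof.
  exists Fmap, Gmap. split; [exact GF|split; [exact FG|split]].
  - intros W HW. induction HW as [S HS| |U W HU IHU HW IHW|I F HF IH].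
    + destruct HS as [n [U [HU ->]]]. apply D_open_nbhd. intros x Hx. exact (F_nbhd n U HU x Hx).
    + apply gen_full.
    + apply gen_inter; auto.
    + apply gen_union; auto.
  - intros W HW. induction HW as [S HS| |U W HU IHU HW IHW|I F HF IH].
    + destruct HS as [S' [HS' ->]]. apply G_base; auto.
    + apply gen_full.
    + apply gen_inter; auto.
    + apply gen_union; auto.
Qed.

End Main.

Theorem corollary4p3 (V : Type) (E : V -> V -> Prop) (enum : nat -> V) :
  (forall v, ~ E v v) ->
  solid V E ->
  (forall v, exists n, enum n = v) ->
  homeomorphic (D_open V E) (lim_open V E enum).
Proof.
  intros Hirr Hsol Henum. exact (main_thm V E enum Hirr Hsol Henum).
Qed.
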